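(* Let $J$ be a Jacobi matrix and $g_n,c_n$ as in the context. (i) If $\sum_{n=1}^\infty[|b_n|+|a_n^2-1|]<\infty$, then $u(z;J)=\lim_{n\to\infty}g_n(z)$ converges for all $z\in\overline{\mathbb{D}}\setminus\{\pm1\}$, uniformly on compact subsets of $\overline{\mathbb{D}}\setminus\{\pm1\}$; $u$ is analytic on $\mathbb{D}$ and continuous on $\overline{\mathbb{D}}\setminus\{\pm1\}$; and for $z\in\mathbb{D}$, $\lim_{n\to\infty}c_n(z)=\frac{u(z;J)}{1-z^2}$. (ii) If $\sum_{n=1}^\infty n[|b_n|+|a_n^2-1|]<\infty$, then $\lim_n g_n(z)$ converges for all $z\in\overline{\mathbb{D}}$, uniformly there, and $u$ is continuous on $\overline{\mathbb{D}}$. (iii) If $|b_n|+|a_n^2-1|\le CR^{-2n}$ for some $C$ and $R>1$, then $\lim_n g_n(z)$ converges for $z\in\{|z|<R\}$, uniformly on compact subsets.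
   Context: $J$ is a Jacobi matrix with diagonal entries $b_n\in\mathbb{R}$ and off-diagonal entries $a_n>0$ ($n\ge1$); set $a_0=1$. The orthonormal polynomials satisfy $p_{-1}=0$, $p_0=1$, $xp_n(x)=a_{n+1}p_{n+1}(x)+b_{n+1}p_n(x)+a_np_{n-1}(x)$. Define $c_n(z)=z^np_n(z+z^{-1})$ and $g_n(z)=z^n\bigl(p_n(z+z^{-1})-a_nzp_{n-1}(z+z^{-1})\bigr)$. $\mathbb{D}=\{|z|<1\}$. *)

(* Defs.v *)
From Stdlib Require Import Reals List.
From Coquelicot Require Import Coquelicot.
Open Scope R_scope.

(* Jacobi parameters: a, b : nat -> R; only a n, b n for n >= 1 are used;
   the convention a_0 = 1 is built in through [a0]. *)
Definition a0 (a : nat -> R) (n : nat) : R := match n with O => 1 | _ => a n end.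

(* coefficients of the orthonormal polynomials:
   jcoef a b n = (coefficients of p_n, coefficients of p_(n-1)),
   with p_(-1) = 0, p_0 = 1 and
   p_(m+1)(x) = ((x - b_(m+1)) p_m(x) - a_m p_(m-1)(x)) / a_(m+1). *)
Fixpoint jcoef (a b : nat -> R) (n : nat) : (nat -> R) * (nat -> R) :=
  match n with
  | O => (fun k => match k with O => 1 | _ => 0 end, fun _ => 0)
  | S m =>
      let (p, q) := jcoef a b m in
      (fun k => ((match k with O => 0 | S k' => p k' end)
                 - b (S m) * p k - a0 a m * q k) / a (S m), p)
  end.

Definition pcoef (a b : nat -> R) (n k : nat) : R := fst (jcoef a b n) k.

Definition pn (a b : nat -> R) (n : nat) (x : C) : C :=
  sum_n (fun k => RtoC (pcoef a b n k) * pow_n x k)%C n.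

(* c_n(z) = z^n p_n(z + 1/z), written out as the polynomial
   sum_{k<=n} pcoef n k z^(n-k) (1+z^2)^k  (this is z^n p_n(z+z^{-1})
   for z <> 0, and its polynomial (continuous) extension at z = 0). *)
Definition cn (a b : nat -> R) (n : nat) (z : C) : C :=
  sum_n (fun k => RtoC (pcoef a b n k) * pow_n z (n - k)
                   * pow_n (1 + z * z) k)%C n.

(* g_n(z) = z^n (p_n(z+1/z) - a_n z p_(n-1)(z+1/z))
          = c_n(z) - a_n z^2 c_(n-1)(z)  (and g_0 = c_0 = 1 since p_(-1)=0) *)
Definition gn (a b : nat -> R) (n : nat) (z : C) : C :=
  match n with
  | O => cn a b O z
  | S m => (cn a b (S m) z - RtoC (a (S m)) * z * z * cn a b m z)%C
  end.

Definition compact_C (K : C -> Prop) : Prop :=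
  forall (I : Type) (U : I -> C -> Prop),
    (forall i, @open C_UniformSpace (U i)) ->
    (forall z, K z -> exists i, U i z) ->
    exists l : list I, forall z, K z -> exists i, In i l /\ U i z.

Definition cv_C (s : nat -> C) (l : C) : Prop :=
  forall eps : R, 0 < eps -> exists N : nat, forall n, (N <= n)%nat ->
    Cmod (s n - l)%C < eps.

Definition unif_cv_on (f : nat -> C -> C) (u : C -> C) (S : C -> Prop) : Prop :=
  forall eps : R, 0 < eps -> exists N : nat, forall n z, (N <= n)%nat -> S z ->
    Cmod (f n z - u z)%C < eps.

Definition unif_cv_compacts (f : nat -> C -> C) (u : C -> C) (S : C -> Prop) : Prop :=
  forall K : C -> Prop, compact_C K -> (forall z, K z -> S z) -> unif_cv_on f u K.

Definition continuous_on_C (u : C -> C) (S : C -> Prop) : Prop :=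
  forall z, S z -> forall eps : R, 0 < eps -> exists delta : R, 0 < delta /\
    forall w, S w -> Cmod (w - z)%C < delta -> Cmod (u w - u z)%C < eps.

Definition analytic_on (u : C -> C) (S : C -> Prop) : Prop :=
  forall z0, S z0 -> exists (r : R) (c : nat -> C), 0 < r /\
    forall z, Cmod (z - z0)%C < r -> @is_pseries C_AbsRing C_NormedModule c (z - z0)%C (u z).

Definition open_disk (z : C) : Prop := Cmod z < 1.
Definition closed_disk (z : C) : Prop := Cmod z <= 1.
Definition closed_disk_pm1 (z : C) : Prop :=
  Cmod z <= 1 /\ z <> RtoC 1 /\ z <> RtoC (-1).
Definition disk_R (R0 : R) (z : C) : Prop := Cmod z < R0.

Definition jdev (a b : nat -> R) (n : nat) : R := Rabs (b n) + Rabs (a n ^ 2 - 1).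

(* Main.v *)
Require Import Defs.
From Stdlib Require Import Reals Lra Lia List.
From Coquelicot Require Import Coquelicot.
Open Scope R_scope.

Ltac cnorm := change plus with Cplus in *; change mult with Cmult in *; change one with (RtoC 1) in *; change zero with (RtoC 0) in *.

Section Rec.
Variables (a b : nat -> R).

Definition E (f : nat -> R) (n : nat) (z : C) : C :=
  sum_n (fun k => RtoC (f k) * pow_n z (n - k) * pow_n (1 + z * z) k)%C n.

Lemma E_S f n z : E f (S n) z = (z * E f n z + RtoC (f (S n)) * pow_n (1 + z*z) (S n))%C.
Proof.
  unfold E. rewrite sum_Sn. replace (S n - S n)%nat with 0%nat by lia.
  cnorm. f_equal.
  - rewrite <- (sum_n_mult_l (K:=C_Ring)). apply sum_n_ext_loc. intros k Hk.
    replace (S n - k)%nat with (S (n - k)) by lia. simpl. cnorm. ring.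
  - simpl. cnorm. ring.
Qed.

Definition sh (f : nat -> R) (k : nat) : R := match k with O => 0 | S k' => f k' end.

Lemma E_sh f n z : E (sh f) (S n) z = ((1 + z*z) * E f n z)%C.
Proof.
  unfold E. unfold sum_n. rewrite sum_Sn_m by lia. 
  rewrite <- sum_n_m_S. simpl sh. cnorm.
  rewrite <- (sum_n_m_mult_l (K:=C_Ring)).
  replace (RtoC 0 * pow_n z (S n - 0) * pow_n (1 + z * z) 0)%C with (RtoC 0) by ring.
  rewrite Cplus_0_l. apply sum_n_m_ext_loc. intros k Hk.
  replace (S n - S k)%nat with (n - k)%nat by lia. simpl. cnorm. ring.
Qed.
End Rec.

Section Rec2.
Variables (a b : nat -> R).
Hypothesis ha : forall n, (1 <= n)%nat -> 0 < a n.

Definition qcoef n := snd (jcoef a b n).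

Lemma jcoef_S m : jcoef a b (S m) =
  (fun k => (sh (pcoef a b m) k - b (S m) * pcoef a b m k - a0 a m * qcoef m k) / a (S m),
   pcoef a b m).
Proof.
  unfold pcoef, qcoef. simpl. destruct (jcoef a b m) as [p q]. simpl. reflexivity.
Qed.

Lemma pcoef_S m k : pcoef a b (S m) k =
  (sh (pcoef a b m) k - b (S m) * pcoef a b m k - a0 a m * qcoef m k) / a (S m).
Proof. unfold pcoef at 1. rewrite jcoef_S. reflexivity. Qed.

Lemma qcoef_S m : qcoef (S m) = pcoef a b m.
Proof. unfold qcoef. rewrite jcoef_S. reflexivity. Qed.

Lemma qcoef_0 k : qcoef 0 k = 0.
Proof. reflexivity. Qed.

Lemma supp n : (forall k, (n < k)%nat -> pcoef a b n k = 0) /\ (forall k, (n <= k)%nat -> qcoef n k = 0).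
Proof.
  induction n as [|n [IH1 IH2]].
  - split; intros k Hk.
    + unfold pcoef. simpl. destruct k; [lia|reflexivity].
    + reflexivity.
  - split; intros k Hk.
    + rewrite pcoef_S. rewrite IH1 by lia. rewrite IH2 by lia.
      destruct k as [|k]; [lia|]. simpl. rewrite IH1 by lia. field. apply Rgt_not_eq, ha. lia.
    + rewrite qcoef_S. apply IH1. lia.
Qed.

Lemma E_0 f z : E f 0 z = RtoC (f 0%nat).
Proof. unfold E. rewrite sum_O. simpl. cnorm. ring. Qed.

Lemma E_lin u v w c d e n z : e <> 0 ->
  E (fun k => (u k - c * v k - d * w k) / e) n z =
  ((E u n z - RtoC c * E v n z - RtoC d * E w n z) / RtoC e)%C.
Proof.
  intros He. induction n as [|n IH].
  - rewrite !E_0. rewrite RtoC_div by auto. rewrite !RtoC_minus, !RtoC_mult. reflexivity.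
  - rewrite !E_S. rewrite IH. rewrite RtoC_div by auto. rewrite !RtoC_minus, !RtoC_mult.
    field. intro H. apply He. injection H. auto.
Qed.

Lemma E_S0 f n z : f (S n) = 0 -> E f (S n) z = (z * E f n z)%C.
Proof. intros H. rewrite E_S, H. cnorm. ring. Qed.

Lemma E_ext f g n z : (forall k, f k = g k) -> E f n z = E g n z.
Proof. intros H. unfold E. apply sum_n_ext. intros k. rewrite H. reflexivity. Qed.

Definition cprev m z : C := match m with O => RtoC 0 | S m' => cn a b m' z end.

Lemma cn_E n z : cn a b n z = E (pcoef a b n) n z.
Proof. reflexivity. Qed.

Lemma cn_S m z : cn a b (S m) z =
  (((1 + z*z - RtoC (b (S m)) * z) * cn a b m z - RtoC (a0 a m) * z * z * cprev m z) / RtoC (a (S m)))%C.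
Proof.
  assert (Ha : a (S m) <> 0) by (apply Rgt_not_eq, ha; lia).
  rewrite !cn_E. rewrite (E_ext _ _ _ _ (pcoef_S m)).
  rewrite E_lin by auto. rewrite E_sh.
  destruct (supp m) as [S1 S2].
  rewrite (E_S0 (pcoef a b m)) by (apply S1; lia).
  rewrite (E_S0 (qcoef m)) by (apply S2; lia).
  destruct m as [|m].
  - rewrite E_0. unfold qcoef. simpl. rewrite E_0. f_equal. ring.
  - rewrite qcoef_S. rewrite (E_S0 (pcoef a b m)) by (apply (proj1 (supp m)); lia).
    simpl cprev. rewrite cn_E. f_equal. ring.
Qed.
End Rec2.

Section Rel.
Variables (a b : nat -> R).
Hypothesis ha : forall n, (1 <= n)%nat -> 0 < a n.

Lemma cn_0 z : cn a b 0 z = RtoC 1.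
Proof. unfold cn. rewrite sum_O. unfold pcoef. simpl. cnorm. ring. Qed.

Lemma gn_0 z : gn a b 0 z = RtoC 1.
Proof. apply cn_0. Qed.

Lemma rel_c n z : cn a b (S n) z = (gn a b (S n) z + RtoC (a (S n)) * z * z * cn a b n z)%C.
Proof. simpl gn. ring. Qed.

Lemma rel_g n z : (gn a b (S n) z - gn a b n z)%C =
  (((1 - RtoC (a (S n))) * gn a b n z + ((1 - RtoC (a (S n)) * RtoC (a (S n))) * z * z - RtoC (b (S n)) * z) * cn a b n z) / RtoC (a (S n)))%C.
Proof.
  assert (Ha : RtoC (a (S n)) <> RtoC 0).
  { intro H. injection H. apply Rgt_not_eq, ha. lia. }
  destruct n as [|m].
  - change (gn a b 1 z) with (cn a b 1 z - RtoC (a 1) * z * z * cn a b 0 z)%C.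
    rewrite gn_0. rewrite (cn_S a b ha 0). simpl cprev. rewrite cn_0. simpl a0.
    field. auto.
  - change (gn a b (S (S m)) z) with (cn a b (S (S m)) z - RtoC (a (S (S m))) * z * z * cn a b (S m) z)%C.
    change (gn a b (S m) z) with (cn a b (S m) z - RtoC (a (S m)) * z * z * cn a b m z)%C.
    rewrite (cn_S a b ha (S m)). simpl cprev. simpl a0. field. auto.
Qed.
End Rel.

Fixpoint Yp (f : nat -> R) (n : nat) : R := match n with O => 1 | S k => Yp f k * (1 + f k) end.
Fixpoint psum (f : nat -> R) (n : nat) : R := match n with O => 0 | S k => psum f k + f k end.

Lemma Yp_ge1 f n : (forall k, 0 <= f k) -> 1 <= Yp f n.
Proof. intros H. induction n; simpl. lra. specialize (H n). nra. Qed.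

Lemma Yp_mono f n : (forall k, 0 <= f k) -> Yp f n <= Yp f (S n).
Proof. intros H. pose proof (Yp_ge1 f n H). simpl. specialize (H n). nra. Qed.

Lemma Yp_exp f n : (forall k, 0 <= f k) -> Yp f n <= exp (psum f n).
Proof.
  intros H. induction n; simpl. rewrite exp_0. lra.
  rewrite exp_plus. pose proof (exp_ineq1_le (f n)). pose proof (Yp_ge1 f n H).
  specialize (H n). apply Rmult_le_compat; lra.
Qed.

Lemma jdev_ge0 a b n : 0 <= jdev a b n.
Proof. unfold jdev. pose proof (Rabs_pos (b n)). pose proof (Rabs_pos (a n ^ 2 - 1)). lra. Qed.

Lemma a_le a b n : 0 < a n -> a n <= 1 + jdev a b n.
Proof.
  intros H. unfold jdev. pose proof (Rabs_pos (b n)).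
  destruct (Rle_dec (a n) 1). pose proof (Rabs_pos (a n ^ 2 - 1)). lra.
  assert (a n ^ 2 - 1 >= 0) by nra. rewrite (Rabs_right _ H1). nra.
Qed.

Lemma one_minus_a a b n : 0 < a n -> Rabs (1 - a n) <= jdev a b n.
Proof.
  intros H. unfold jdev. pose proof (Rabs_pos (b n)).
  assert (Rabs (1 - a n) <= Rabs (a n ^2 - 1)).
  { destruct (Rle_dec (a n) 1).
    - rewrite Rabs_right by lra. rewrite Rabs_left1 by nra. nra.
    - rewrite Rabs_left1 by lra. rewrite Rabs_right by nra. nra. }
  lra.
Qed.

Lemma e_bound a b n t : 0 <= t -> Rabs (1 - a n ^ 2) * t^2 + Rabs (b n) * t <= jdev a b n * (t^2 + t).
Proof.
  intros Ht. unfold jdev. replace (Rabs (1 - a n ^ 2)) with (Rabs (a n ^ 2 - 1)).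
  2:{ rewrite <- Rabs_Ropp. f_equal. ring. }
  pose proof (Rabs_pos (b n)). pose proof (Rabs_pos (a n ^ 2 - 1)). nra.
Qed.

Section Core.
Variables (a b : nat -> R) (t m : R).
Hypothesis ht : 0 <= t.
Hypothesis hm : 0 < m.
Hypothesis ham : forall n, m <= a (S n).

Fixpoint Lseq (n : nat) : R := match n with O => 1 | S k => 1 + a (S k) * t^2 * Lseq k end.
Definition th (n : nat) : R := jdev a b (S n) * (1 + t + t^2) * (1 + Lseq n) / m.

Lemma Lseq_ge1 n : 1 <= Lseq n.
Proof. induction n; simpl. lra. specialize (ham n). assert (0 <= t^2) by nra. assert (0 <= a (S n) * t^2) by nra. nra. Qed.

Lemma th_ge0 n : 0 <= th n.
Proof. unfold th. pose proof (jdev_ge0 a b (S n)). pose proof (Lseq_ge1 n).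
  apply Rmult_le_pos; [|left; apply Rinv_0_lt_compat; auto].
  assert (0 <= 1 + t + t^2) by nra. apply Rmult_le_pos; [apply Rmult_le_pos|]; lra. Qed.

Variables (x y d : nat -> R).
Hypothesis hx0 : x 0%nat <= 1.
Hypothesis hy0 : y 0%nat <= 1.
Hypothesis hx : forall n, x (S n) <= y (S n) + a (S n) * t^2 * x n.
Hypothesis hd : forall n, d n <= (Rabs (1 - a (S n)) * y n + (Rabs (1 - a (S n) ^ 2) * t^2 + Rabs (b (S n)) * t) * x n) / a (S n).
Hypothesis hy : forall n, y (S n) <= y n + d n.

Lemma core_inv n : y n <= Yp th n /\ x n <= Lseq n * Yp th n /\ d n <= th n * Yp th n.
Proof.
  assert (Hd : forall n, y n <= Yp th n -> x n <= Lseq n * Yp th n -> d n <= th n * Yp th n).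
  { intros k Hy Hx. pose proof (hd k) as hdk. pose proof (ham k) as hak.
    pose proof (one_minus_a a b (S k) ltac:(lra)) as H1.
    pose proof (e_bound a b (S k) t ht) as H2.
    pose proof (Yp_ge1 th k th_ge0) as H3. pose proof (Lseq_ge1 k) as H4.
    pose proof (jdev_ge0 a b (S k)) as H5.
    set (J := jdev a b (S k)) in *. set (Y := Yp th k) in *. set (L := Lseq k) in *.
    set (A1 := Rabs (1 - a (S k))) in *.
    set (E1 := Rabs (1 - a (S k) ^ 2) * t ^ 2 + Rabs (b (S k)) * t) in *.
    assert (HA1 : 0 <= A1) by apply Rabs_pos.
    assert (HE1 : 0 <= E1).
    { unfold E1. pose proof (Rabs_pos (1 - a (S k) ^ 2)). pose proof (Rabs_pos (b (S k))). nra. }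
    assert (N1 : A1 * y k <= J * Y).
    { destruct (Rle_dec 0 (y k)). apply Rmult_le_compat; lra. nra. }
    assert (N2 : E1 * x k <= J * (t^2 + t) * (L * Y)).
    { assert (0 <= J * (t^2 + t)) by (apply Rmult_le_pos; nra).
      assert (0 <= L * Y) by nra. assert (0 <= J * (t^2 + t) * (L * Y)) by nra.
      destruct (Rle_dec 0 (x k)). apply Rmult_le_compat; try lra. nra. }
    assert (N3 : J * Y + J * (t^2+t) * (L * Y) <= J * (1 + t + t^2) * (1 + L) * Y).
    { assert (0 <= J * Y) by nra. assert (0 <= t^2) by nra.
      assert (0 <= J * Y * L) by nra. assert (0 <= J*Y*(t + t^2)) by nra.
      nra. }
    assert (0 <= J * (1 + t + t^2) * (1 + L) * Y).
    { assert (0 <= 1 + t + t^2) by nra. apply Rmult_le_pos; [|lra].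
      apply Rmult_le_pos; [apply Rmult_le_pos|]; lra. }
    eapply Rle_trans; [apply hdk|]. unfold th. fold J. fold L.
    unfold Rdiv. 
    apply Rle_trans with (J * (1 + t + t ^ 2) * (1 + L) * Y * / a (S k)).
    { apply Rmult_le_compat_r. left; apply Rinv_0_lt_compat; lra. lra. }
    replace (J * (1 + t + t ^ 2) * (1 + L) * / m * Y) with (J * (1 + t + t ^ 2) * (1 + L) * Y * / m) by ring.
    apply Rmult_le_compat_l. auto. apply Rinv_le_contravar; lra. }
  induction n as [|n [IH1 [IH2 IH3]]].
  - simpl. split; [lra|]. split; [lra|]. apply Hd; simpl; lra.
  - assert (Y1 : y (S n) <= Yp th (S n)).
    { simpl. pose proof (hy n). pose proof (th_ge0 n). pose proof (Yp_ge1 th n th_ge0). nra. }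
    assert (Y2 : x (S n) <= Lseq (S n) * Yp th (S n)).
    { pose proof (hx n). pose proof (Yp_mono th n th_ge0). pose proof (ham n).
      pose proof (Yp_ge1 th n th_ge0). pose proof (Lseq_ge1 n).
      assert (0 <= t^2) by nra.
      assert (a (S n) * t^2 * x n <= a (S n) * t^2 * (Lseq n * Yp th (S n))).
      { apply Rmult_le_compat_l. nra. nra. }
      simpl Lseq. simpl Lseq in H3. lra. }
    repeat split; auto.
Qed.
End Core.

Lemma psum_S_sum f n : psum f (S n) = sum_n f n.
Proof.
  induction n. simpl. rewrite sum_O. ring.
  rewrite sum_Sn. simpl psum in *. rewrite IHn. reflexivity.
Qed.

Lemma psum_le_Series f n : (forall k, 0 <= f k) -> ex_series f -> psum f n <= Series f.
Proof.
  intros Hf Hex.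
  assert (Hl : is_lim_seq (sum_n f) (Series f)).
  { apply Series_correct in Hex. exact Hex. }
  assert (Hinc : forall n, sum_n f n <= Series f).
  { intros k. apply (is_lim_seq_incr_compare (sum_n f) (Series f) Hl).
    intros j. rewrite sum_Sn. pose proof (Hf (S j)). change plus with Rplus. lra. }
  destruct n. simpl. eapply Rle_trans; [|apply (Hinc 0%nat)]. rewrite sum_O. apply Hf.
  rewrite psum_S_sum. apply Hinc.
Qed.

Section CoreSum.
Variables (a b : nat -> R) (t m : R).
Hypothesis ht : 0 <= t.
Hypothesis hm : 0 < m.
Hypothesis ham : forall n, m <= a (S n).

Fixpoint Sg (n : nat) : R := match n with O => 1 | S k => 1 + t^2 * Sg k end.

Lemma Sg_ge1 n : 1 <= Sg n.
Proof. induction n; simpl. lra. assert (0 <= t^2) by nra. nra. Qed.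

Lemma Lseq_bound n : Lseq a t n <= Yp (fun k => jdev a b (S k)) n * Sg n.
Proof.
  induction n. simpl. lra.
  simpl Lseq. simpl Yp. simpl Sg.
  pose proof (ham n). pose proof (a_le a b (S n) ltac:(lra)).
  pose proof (Yp_ge1 (fun k => jdev a b (S k)) n (fun k => jdev_ge0 a b (S k))).
  pose proof (jdev_ge0 a b (S n)). pose proof (Sg_ge1 n). pose proof (Lseq_ge1 a t m hm ham n).
  set (A := Yp (fun k : nat => jdev a b (S k)) n) in *.
  set (J := jdev a b (S n)) in *.
  assert (0 <= t^2) by nra.
  assert (a (S n) * t^2 * Lseq a t n <= (1 + J) * t^2 * (A * Sg n)).
  { apply Rmult_le_compat. nra. lra. nra. auto. }
  assert (1 <= A * (1 + J)) by nra.
  assert (0 <= A * (1+J) * t^2 * Sg n) by (apply Rmult_le_pos; [|lra]; apply Rmult_le_pos; nra).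
  nra.
Qed.

Lemma Sg_lt1 n : t < 1 -> Sg n <= / (1 - t^2).
Proof.
  intros Ht1. assert (t^2 < 1) by nra. assert (0 <= t^2) by nra.
  assert (0 < 1 - t^2) by lra.
  induction n; simpl.
  - apply (Rmult_le_reg_r (1 - t^2)); auto. rewrite Rinv_l by lra. nra.
  - apply (Rmult_le_reg_r (1 - t^2)); auto. rewrite Rinv_l by lra.
    assert (t^2 * Sg n <= t^2 * / (1 - t^2)) by (apply Rmult_le_compat_l; auto).
    assert (t^2 * / (1 - t^2) * (1 - t^2) = t^2) by (field; lra).
    nra.
Qed.

Lemma Sg_ge1t n : 1 <= t -> Sg n <= INR (S n) * t^(2*n).
Proof.
  intros Ht1. induction n.
  - simpl. lra.
  - simpl Sg. rewrite S_INR.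
    replace (2 * S n)%nat with (S (S (2*n))) by lia. simpl pow.
    assert (1 <= t^(2*n)) by (apply pow_R1_Rle; lra).
    assert (0 <= INR (S n)) by apply pos_INR.
    assert (t^2 * Sg n <= t^2 * (INR (S n) * t^(2*n))) by (apply Rmult_le_compat_l; nra).
    assert (1 <= t * (t * t^(2*n))) by nra.
    rewrite S_INR in *. simpl pow in *. nra.
Qed.

End CoreSum.

Section Bdry.
Variables (a b : nat -> R) (m dl : R).
Hypothesis hm : 0 < m.
Hypothesis hdl : 0 < dl.
Hypothesis ham : forall n, m <= a (S n).

Definition kap (n : nat) : R := jdev a b (S n) * (2 * (1 + 2 / dl) / m + 2 / dl).

Lemma kap_ge0 n : 0 <= kap n.
Proof.
  unfold kap. apply Rmult_le_pos. apply jdev_ge0.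
  assert (0 < 2/dl) by (apply Rdiv_lt_0_compat; lra).
  assert (0 < 2 * (1 + 2/dl) / m) by (apply Rdiv_lt_0_compat; lra). lra.
Qed.

Variables (x y h d : nat -> R).
Hypothesis hx0 : forall n, 0 <= x n.
Hypothesis hy0 : forall n, 0 <= y n.
Hypothesis hh0 : forall n, 0 <= h n.
Hypothesis hy00 : y 0%nat <= 1.
Hypothesis hh00 : h 0%nat <= 1.
Hypothesis hx : forall n, x n <= (h n + y n) / dl.
Hypothesis hd : forall n, d n <= (Rabs (1 - a (S n)) * y n + (Rabs (1 - a (S n) ^ 2) * 1^2 + Rabs (b (S n)) * 1) * x n) / a (S n).
Hypothesis hy : forall n, y (S n) <= y n + d n.
Hypothesis hh : forall n, h (S n) <= h n + d n + 2 * Rabs (1 - a (S n)) * x n.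

Lemma bdry_inv n : h n + y n <= 2 * Yp kap n /\ d n <= jdev a b (S n) * (1 + 2 / dl) / m * (2 * Yp kap n).
Proof.
  assert (Hd : forall k, h k + y k <= 2 * Yp kap k -> d k <= jdev a b (S k) * (1 + 2 / dl) / m * (2 * Yp kap k)
      /\ d k <= jdev a b (S k) * (1 + 2 / dl) / m * (h k + y k)).
  { intros k HP. pose proof (hd k) as hdk. pose proof (ham k) as hak.
    pose proof (one_minus_a a b (S k) ltac:(lra)) as H1.
    pose proof (e_bound a b (S k) 1 ltac:(lra)) as H2.
    pose proof (jdev_ge0 a b (S k)) as H5.
    pose proof (hx k) as hxk. pose proof (hx0 k). pose proof (hy0 k). pose proof (hh0 k).
    set (J := jdev a b (S k)) in *. set (P := h k + y k) in *.
    set (A1 := Rabs (1 - a (S k))) in *.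
    set (E1 := Rabs (1 - a (S k) ^ 2) * 1 ^ 2 + Rabs (b (S k)) * 1) in *.
    assert (HA1 : 0 <= A1) by apply Rabs_pos.
    assert (y k <= P) by (unfold P; lra). assert (0 <= P) by (unfold P; lra).
    assert (x k * dl <= P) by (unfold Rdiv in hxk; apply (Rmult_le_compat_r dl) in hxk; [|lra]; rewrite Rmult_assoc, Rinv_l in hxk; lra).
    assert (N1 : A1 * y k + E1 * x k <= J * P * (1 + 2/dl)).
    { assert (A1 * y k <= J * P) by (apply Rmult_le_compat; lra).
      assert (E1 * x k <= J * 2 * x k) by (apply Rmult_le_compat_r; lra).
      assert (J * 2 * x k * dl <= J * 2 * P) by (rewrite Rmult_assoc; apply Rmult_le_compat_l; lra).
      assert (J * 2 * x k <= J * P * (2 / dl)).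
      { apply (Rmult_le_reg_r dl); auto. unfold Rdiv. replace (J * P * (2 * / dl) * dl) with (J * 2 * P) by (field; lra). lra. }
      lra. }
    assert (0 <= J * P * (1 + 2/dl)).
    { assert (0 < 2/dl) by (apply Rdiv_lt_0_compat; lra). apply Rmult_le_pos; [apply Rmult_le_pos|]; lra. }
    assert (Hdk2 : d k <= J * (1 + 2 / dl) / m * P).
    { eapply Rle_trans; [apply hdk|]. unfold Rdiv.
      apply Rle_trans with (J * P * (1 + 2 / dl) * / a (S k)).
      { apply Rmult_le_compat_r. left; apply Rinv_0_lt_compat; lra. lra. }
      replace (J * (1 + 2 * / dl) * / m * P) with (J * P * (1 + 2 * / dl) * / m) by ring.
      apply Rmult_le_compat_l. unfold Rdiv in *. lra. apply Rinv_le_contravar; lra. }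
    split; auto. eapply Rle_trans; [apply Hdk2|]. apply Rmult_le_compat_l; auto.
    assert (0 < 2/dl) by (apply Rdiv_lt_0_compat; lra).
    apply Rmult_le_pos; [apply Rmult_le_pos|]; [lra|lra|left; apply Rinv_0_lt_compat; lra]. }
  induction n as [|n IH].
  - simpl. split. lra. apply Hd. simpl. lra.
  - assert (HP : h (S n) + y (S n) <= 2 * Yp kap (S n)).
    { destruct (Hd n (proj1 IH)) as [_ Hdn]. destruct IH as [IH _].
      pose proof (hy n). pose proof (hh n). pose proof (hx n).
      pose proof (one_minus_a a b (S n) ltac:(pose proof (ham n); lra)).
      pose proof (jdev_ge0 a b (S n)). pose proof (hx0 n).
      assert (2 * Rabs (1 - a (S n)) * x n <= 2 * jdev a b (S n) * ((h n + y n) / dl)).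
      { pose proof (Rabs_pos (1 - a (S n))). apply Rmult_le_compat; lra. }
      simpl Yp. 
      set (J := jdev a b (S n)) in *. set (P := h n + y n) in *.
      replace (kap n) with (J * (2 * (1 + 2 / dl) / m + 2 / dl)) by reflexivity.
      assert (J * (1 + 2 / dl) / m * P * 2 + 2 * J * (P / dl) = P * (J * (2 * (1 + 2 / dl) / m + 2 / dl))) by (field; lra).
      assert (0 <= P * (J * (2 * (1 + 2 / dl) / m + 2 / dl)) <= 2 * Yp kap n * (J * (2 * (1 + 2 / dl) / m + 2 / dl))).
      { pose proof (kap_ge0 n). unfold kap in H7. fold J in H7. split. apply Rmult_le_pos; [pose proof (hh0 n); pose proof (hy0 n); unfold P; lra| lra].
        apply Rmult_le_compat_r; lra. }
      assert (2 * (Yp kap n * (1 + J * (2 * (1 + 2 / dl) / m + 2 / dl))) = 2 * Yp kap n + 2 * Yp kap n * (J * (2 * (1 + 2 / dl) / m + 2 / dl))) by ring.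
      assert (HPdef : P = h n + y n) by reflexivity. lra. }
    split; auto. apply Hd; auto.
Qed.
End Bdry.

Definition ulim (f : nat -> C -> C) (z : C) : C :=
  (real (Lim_seq (fun n => fst (f n z))), real (Lim_seq (fun n => snd (f n z)))).

Lemma Cmod_le_2 (w : C) : Cmod w <= 2 * (Rabs (fst w) + Rabs (snd w)).
Proof.
  eapply Rle_trans; [apply Cmod_2Rmax|].
  assert (sqrt 2 <= 2).
  { rewrite <- (sqrt_square 2) at 2 by lra. apply sqrt_le_1; lra. }
  pose proof (Rabs_pos (fst w)). pose proof (Rabs_pos (snd w)).
  assert (Rmax (Rabs (fst w)) (Rabs (snd w)) <= Rabs (fst w) + Rabs (snd w)).
  { unfold Rmax. destruct (Rle_dec _ _); lra. }
  assert (0 <= Rmax (Rabs (fst w)) (Rabs (snd w))).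
  { unfold Rmax. destruct (Rle_dec _ _); lra. }
  assert (0 <= sqrt 2) by apply sqrt_pos. nra.
Qed.

Lemma fst_le_Cmod (w : C) : Rabs (fst w) <= Cmod w.
Proof. apply re_le_Cmod. Qed.
Lemma snd_le_Cmod (w : C) : Rabs (snd w) <= Cmod w.
Proof.
  unfold Cmod. rewrite <- sqrt_Rsqr_abs. apply sqrt_le_1_alt. unfold Rsqr. simpl.
  pose proof (pow2_ge_0 (fst w)). nra.
Qed.

Lemma psum_lim e : ex_series e -> is_lim_seq (psum e) (Series e).
Proof.
  intros H. apply is_lim_seq_incr_1. eapply is_lim_seq_ext.
  - intros n. symmetry. apply psum_S_sum.
  - apply Series_correct in H. exact H.
Qed.

Lemma psum_cauchy e : ex_series e -> forall eta, 0 < eta -> exists N, forall n m, (N <= n)%nat -> (N <= m)%nat -> Rabs (psum e m - psum e n) < eta.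
Proof.
  intros H eta Heta. apply psum_lim in H. apply is_lim_seq_spec in H.
  destruct (H (mkposreal (eta/2) ltac:(lra))) as [N HN]. exists N. intros n m Hn Hm.
  specialize (HN n Hn) as H1. pose proof (HN m Hm) as H2. simpl in *.
  rewrite Rabs_lt_between in *. split; lra.
Qed.

Section Unif.
Variables (f : nat -> C -> C) (S : C -> Prop) (e : nat -> R).
Hypothesis he : ex_series e.
Hypothesis hf : forall n z, S z -> Cmod (f (Datatypes.S n) z - f n z)%C <= e n.

Lemma tele z : S z -> forall n k, Cmod (f (n + k)%nat z - f n z)%C <= psum e (n + k) - psum e n.
Proof.
  intros Hz n k. induction k.
  - rewrite Nat.add_0_r. replace (f n z - f n z)%C with (RtoC 0) by ring. rewrite Cmod_0. lra.
  - replace (n + Datatypes.S k)%nat with (Datatypes.S (n + k)) by lia. simpl psum.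
    replace (f (Datatypes.S (n + k)) z - f n z)%C with ((f (Datatypes.S (n + k)) z - f (n+k)%nat z) + (f (n+k)%nat z - f n z))%C by ring.
    eapply Rle_trans; [apply Cmod_triangle|]. pose proof (hf (n+k) z Hz). lra.
Qed.

Lemma ucauchy eta : 0 < eta -> exists N, forall n m z, (N <= n)%nat -> (N <= m)%nat -> S z -> Cmod (f m z - f n z)%C < eta.
Proof.
  intros Heta. destruct (psum_cauchy e he eta Heta) as [N HN]. exists N. intros n m z Hn Hm Hz.
  destruct (Nat.le_ge_cases n m) as [Hnm|Hnm].
  - replace m with (n + (m - n))%nat by lia. eapply Rle_lt_trans; [apply tele; auto|].
    replace (n + (m - n))%nat with m by lia. specialize (HN n m Hn Hm). apply Rabs_lt_between in HN. lra.
  - replace (f m z - f n z)%C with (- (f n z - f m z))%C by ring. rewrite Cmod_opp.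
    replace n with (m + (n - m))%nat by lia. eapply Rle_lt_trans; [apply tele; auto|].
    replace (m + (n - m))%nat with n by lia. specialize (HN m n Hm Hn). apply Rabs_lt_between in HN. lra.
Qed.

Lemma comp_lim (p : C -> R) (hp : forall w, Rabs (p w) <= Cmod w) (hpm : forall u v, p (u - v)%C = p u - p v) z : S z ->
  is_lim_seq (fun n => p (f n z)) (real (Lim_seq (fun n => p (f n z)))) /\
  forall eta, 0 < eta -> exists N, forall n, (N <= n)%nat -> Rabs (p (f n z) - real (Lim_seq (fun n => p (f n z)))) <= eta.
Proof.
  intros Hz.
  assert (Hc : ex_lim_seq_cauchy (fun n => p (f n z))).
  { intros eps. destruct (ucauchy eps (cond_pos eps)) as [N HN]. exists N. intros n m Hn Hm.
    eapply Rle_lt_trans; [|apply (HN m n z Hm Hn Hz)]. rewrite <- hpm. apply hp. }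
  apply ex_lim_seq_cauchy_corr in Hc. apply Lim_seq_correct' in Hc.
  split; auto. intros eta Heta. destruct (ucauchy eta Heta) as [N HN]. exists N. intros n Hn.
  set (L := real (Lim_seq (fun n => p (f n z)))) in *.
  assert (Hl : is_lim_seq (fun m => Rabs (p (f m z) - p (f n z))) (Rabs (L - p (f n z)))).
  { apply (is_lim_seq_abs _ (Finite (L - p (f n z)))). apply is_lim_seq_minus'. auto. apply is_lim_seq_const. }
  assert (Rbar_le (Rabs (L - p (f n z))) eta).
  { eapply is_lim_seq_le_loc; [|apply Hl|apply is_lim_seq_const]. exists N. intros m Hm.
    rewrite <- hpm. eapply Rle_trans; [apply hp|]. left. apply HN; auto. }
  simpl in H. rewrite Rabs_minus_sym. auto.
Qed.

Lemma unif_lim : unif_cv_on f (ulim f) S /\ forall z, S z -> cv_C (fun n => f n z) (ulim f z).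
Proof.
  assert (U : unif_cv_on f (ulim f) S).
  { intros eps Heps.
    destruct (ucauchy (eps/8) ltac:(lra)) as [N HN]. exists N. intros n z Hn Hz.
    destruct (comp_lim fst fst_le_Cmod (fun u v => eq_refl) z Hz) as [_ H1].
    destruct (comp_lim snd snd_le_Cmod (fun u v => eq_refl) z Hz) as [_ H2].
    destruct (H1 (eps/8) ltac:(lra)) as [N1 HN1]. destruct (H2 (eps/8) ltac:(lra)) as [N2 HN2].
    set (m := (N + N1 + N2)%nat).
    replace (f n z - ulim f z)%C with ((f n z - f m z) + (f m z - ulim f z))%C by ring.
    eapply Rle_lt_trans; [apply Cmod_triangle|].
    assert (Cmod (f n z - f m z)%C < eps / 8).
    { replace (f n z - f m z)%C with (- (f m z - f n z))%C by ring. rewrite Cmod_opp. apply HN; auto. unfold m; lia. }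
    assert (Cmod (f m z - ulim f z)%C <= 2 * (eps/8 + eps/8)).
    { eapply Rle_trans; [apply Cmod_le_2|]. apply Rmult_le_compat_l. lra.
      apply Rplus_le_compat. apply HN1. unfold m; lia. apply HN2. unfold m; lia. }
    lra. }
  split; auto. intros z Hz eps Heps. destruct (U eps Heps) as [N HN]. exists N. intros n Hn. apply HN; auto.
Qed.
End Unif.

Lemma Cmod_RtoC r : Cmod (RtoC r) = Rabs r.
Proof. apply Cmod_R. Qed.

Lemma exists_m (a b : nat -> R) : (forall n, (1 <= n)%nat -> 0 < a n) ->
  ex_series (fun n => jdev a b (S n)) -> exists m, 0 < m /\ forall n, m <= a (S n).
Proof.
  intros ha Hs. apply ex_series_lim_0 in Hs. apply is_lim_seq_spec in Hs.
  destruct (Hs (mkposreal (1/2) ltac:(lra))) as [N HN]. simpl in HN.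
  assert (Hlow : forall n, (N <= n)%nat -> 1/2 <= a (S n)).
  { intros n Hn. specialize (HN n Hn). rewrite Rminus_0_r in HN.
    pose proof (ha (S n) ltac:(lia)). unfold jdev in HN.
    rewrite Rabs_right in HN by (pose proof (Rabs_pos (b (S n))); pose proof (Rabs_pos (a (S n) ^ 2 - 1)); lra).
    pose proof (Rabs_pos (b (S n))). pose proof (Rle_abs (- (a (S n) ^ 2 - 1))). rewrite Rabs_Ropp in H1.
    nra. }
  assert (Hfin : forall K, exists m, 0 < m /\ forall n, (n < K)%nat -> m <= a (S n)).
  { induction K. exists 1. split. lra. intros; lia.
    destruct IHK as [m [Hm HK]]. exists (Rmin m (a (S K))). split.
    apply Rmin_pos; auto. apply ha; lia.
    intros n Hn. destruct (Nat.eq_dec n K). subst. apply Rmin_r.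
    eapply Rle_trans; [apply Rmin_l|]. apply HK. lia. }
  destruct (Hfin N) as [m [Hm HK]]. exists (Rmin m (1/2)). split. apply Rmin_pos; lra.
  intros n. destruct (Nat.lt_ge_cases n N). eapply Rle_trans; [apply Rmin_l|]. auto.
  eapply Rle_trans; [apply Rmin_r|]. auto.
Qed.

Section Inst.
Variables (a b : nat -> R).
Hypothesis ha : forall n, (1 <= n)%nat -> 0 < a n.

Lemma Cmod_zz z : Cmod (z * z)%C = Cmod z ^ 2.
Proof. rewrite Cmod_mult. ring. Qed.

Lemma val_hx t z n : Cmod z <= t -> Cmod (cn a b (S n) z) <= Cmod (gn a b (S n) z) + a (S n) * t^2 * Cmod (cn a b n z).
Proof.
  intros Hz. rewrite (rel_c a b). eapply Rle_trans; [apply Cmod_triangle|].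
  apply Rplus_le_compat_l. rewrite !Cmod_mult, Cmod_RtoC.
  pose proof (ha (S n) ltac:(lia)). rewrite Rabs_right by lra.
  pose proof (Cmod_ge_0 z). pose proof (Cmod_ge_0 (cn a b n z)).
  apply Rmult_le_compat_r; auto. rewrite Rmult_assoc. apply Rmult_le_compat_l. lra.
  simpl. rewrite Rmult_1_r. apply Rmult_le_compat; auto.
Qed.

Lemma val_hd t z n : Cmod z <= t ->
  Cmod (gn a b (S n) z - gn a b n z)%C <=
  (Rabs (1 - a (S n)) * Cmod (gn a b n z) + (Rabs (1 - a (S n) ^ 2) * t^2 + Rabs (b (S n)) * t) * Cmod (cn a b n z)) / a (S n).
Proof.
  intros Hz. pose proof (ha (S n) ltac:(lia)) as Ha.
  rewrite (rel_g a b ha). rewrite Cmod_div.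
  2:{ intro H. injection H. lra. }
  rewrite Cmod_RtoC, (Rabs_right (a (S n))) by lra.
  unfold Rdiv. apply Rmult_le_compat_r. left; apply Rinv_0_lt_compat; lra.
  eapply Rle_trans; [apply Cmod_triangle|]. rewrite Cmod_mult. 
  replace (1 - RtoC (a (S n)))%C with (RtoC (1 - a (S n))) by (rewrite RtoC_minus; reflexivity).
  rewrite Cmod_RtoC. apply Rplus_le_compat_l. rewrite Cmod_mult. apply Rmult_le_compat_r. apply Cmod_ge_0.
  eapply Rle_trans; [apply Cmod_triangle|]. rewrite Cmod_opp.
  replace (1 - RtoC (a (S n)) * RtoC (a (S n)))%C with (RtoC (1 - a (S n) ^ 2)) by (apply injective_projections; simpl; ring).
  rewrite !Cmod_mult, !Cmod_RtoC.
  pose proof (Cmod_ge_0 z). pose proof (Rabs_pos (1 - a (S n) ^ 2)). pose proof (Rabs_pos (b (S n))).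
  apply Rplus_le_compat. rewrite Rmult_assoc. apply Rmult_le_compat_l; auto. simpl. rewrite Rmult_1_r. apply Rmult_le_compat; auto.
  apply Rmult_le_compat_l; auto.
Qed.

Lemma val_hy z n : Cmod (gn a b (S n) z) <= Cmod (gn a b n z) + Cmod (gn a b (S n) z - gn a b n z)%C.
Proof.
  replace (gn a b (S n) z) with (gn a b n z + (gn a b (S n) z - gn a b n z))%C at 1 by ring. apply Cmod_triangle.
Qed.

Lemma val_core t m z : 0 <= t -> 0 < m -> (forall n, m <= a (S n)) -> Cmod z <= t ->
  forall n, Cmod (gn a b (S n) z - gn a b n z)%C <= th a b t m n * Yp (th a b t m) n.
Proof.
  intros Ht Hm Ham Hz n.
  refine (proj2 (proj2 (core_inv a b t m Ht Hm Ham (fun n => Cmod (cn a b n z)) (fun n => Cmod (gn a b n z))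
    (fun n => Cmod (gn a b (S n) z - gn a b n z)%C) _ _ _ _ _ n))).
  - cbv beta. rewrite (cn_0 a b), Cmod_1. lra.
  - cbv beta. rewrite (gn_0 a b), Cmod_1. lra.
  - intros k. apply val_hx; auto.
  - intros k. apply val_hd; auto.
  - intros k. apply val_hy.
Qed.

Lemma val_bdry m dl z : 0 < m -> 0 < dl -> (forall n, m <= a (S n)) -> Cmod z <= 1 -> dl <= Cmod (1 - z * z)%C ->
  forall n, Cmod ((1 - z*z) * cn a b n z - gn a b n z)%C + Cmod (gn a b n z) <= 2 * Yp (kap a b m dl) n /\
   Cmod (gn a b (S n) z - gn a b n z)%C <= jdev a b (S n) * (1 + 2 / dl) / m * (2 * Yp (kap a b m dl) n).
Proof.
  intros Hm Hdl Ham Hz Hd n.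
  assert (Hzz : Cmod (z * z)%C <= 1) by (rewrite Cmod_zz; pose proof (Cmod_ge_0 z); nra).
  assert (H1zz : Cmod (1 - z * z)%C <= 2).
  { unfold Cminus. eapply Rle_trans; [apply Cmod_triangle|]. rewrite Cmod_opp, Cmod_1. lra. }
  assert (F1 : Cmod ((1 - z * z) * cn a b 0 z - gn a b 0 z)%C <= 1).
  { rewrite (cn_0 a b), (gn_0 a b). replace ((1 - z * z) * 1 - 1)%C with (- (z*z))%C by ring.
    rewrite Cmod_opp. auto. }
  assert (F2 : forall n, Cmod (cn a b n z) <= (Cmod ((1 - z * z) * cn a b n z - gn a b n z)%C + Cmod (gn a b n z)) / dl).
  { intros k. apply (Rmult_le_reg_r dl); auto. unfold Rdiv. rewrite Rmult_assoc, Rinv_l, Rmult_1_r by lra.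
    apply Rle_trans with (Cmod (cn a b k z) * Cmod (1 - z*z)%C).
    apply Rmult_le_compat_l; auto. apply Cmod_ge_0.
    rewrite Rmult_comm, <- Cmod_mult.
    eapply Rle_trans; [|apply (Cmod_triangle ((1 - z * z) * cn a b k z - gn a b k z) (gn a b k z))].
    right. f_equal. ring. }
  assert (F5 : forall n, Cmod ((1 - z * z) * cn a b (S n) z - gn a b (S n) z)%C <=
     Cmod ((1 - z * z) * cn a b n z - gn a b n z)%C + Cmod (gn a b (S n) z - gn a b n z)%C +
     2 * Rabs (1 - a (S n)) * Cmod (cn a b n z)).
  { intros k. rewrite (rel_c a b).
    replace ((1 - z * z) * (gn a b (S k) z + RtoC (a (S k)) * z * z * cn a b k z) - gn a b (S k) z)%C
      with ((z * z) * (((1 - z * z) * cn a b k z - gn a b k z) - (gn a b (S k) z - gn a b k z)) + (1 - z * z) * (RtoC (a (S k)) - 1) * (z * z) * cn a b k z)%C by ring.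
    eapply Rle_trans; [apply Cmod_triangle|]. rewrite !Cmod_mult.
    assert (T : Cmod (((1 - z * z) * cn a b k z - gn a b k z) - (gn a b (S k) z - gn a b k z))%C <= Cmod ((1 - z * z) * cn a b k z - gn a b k z)%C + Cmod (gn a b (S k) z - gn a b k z)%C).
    { pose proof (Cmod_triangle ((1 - z * z) * cn a b k z - gn a b k z)%C (- (gn a b (S k) z - gn a b k z))%C) as T.
      rewrite Cmod_opp in T. exact T. }
    replace (RtoC (a (S k)) - 1)%C with (RtoC (- (1 - a (S k)))) by (apply injective_projections; simpl; ring).
    rewrite Cmod_RtoC, Rabs_Ropp.
    pose proof (Cmod_ge_0 z). pose proof (Cmod_ge_0 (cn a b k z)). pose proof (Rabs_pos (1 - a (S k))).
    pose proof (Cmod_ge_0 (z*z)%C). pose proof (Cmod_ge_0 (1 - z*z)%C).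
    pose proof (Cmod_ge_0 ((1 - z * z) * cn a b k z - gn a b k z - (gn a b (S k) z - gn a b k z))%C).
    assert (Hq : Cmod z * Cmod z <= 1) by nra.
    assert (0 <= Cmod z * Cmod z) by nra.
    apply Rplus_le_compat.
    - apply Rle_trans with (1 * Cmod ((1 - z * z) * cn a b k z - gn a b k z - (gn a b (S k) z - gn a b k z))%C).
      apply Rmult_le_compat_r; auto. lra.
    - set (A := Cmod (1 - z * z)%C) in *. set (r := Rabs (1 - a (S k))) in *. set (q := Cmod z * Cmod z) in *.
      set (c := Cmod (cn a b k z)) in *.
      assert (A * q <= 2 * 1) by (apply Rmult_le_compat; lra).
      assert (0 <= r * c) by nra.
      replace (A * r * q * c) with ((A * q) * (r * c)) by ring.
      replace (2 * r * c) with (2 * (r * c)) by ring.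
      apply Rmult_le_compat_r; lra. }
  pose proof (bdry_inv a b m dl Hm Hdl Ham (fun n => Cmod (cn a b n z)) (fun n => Cmod (gn a b n z))
    (fun n => Cmod ((1 - z*z) * cn a b n z - gn a b n z)%C)
    (fun n => Cmod (gn a b (S n) z - gn a b n z)%C)) as B.
  refine (B _ _ _ _ _ _ _ _ _ n); cbv beta.
  all: try (intros; apply Cmod_ge_0).
  - rewrite (gn_0 a b), Cmod_1. lra.
  - auto.
  - auto.
  - intros k. apply val_hd; auto.
  - intros k. apply val_hy.
  - auto.
Qed.
End Inst.

Lemma exp_mono x y : x <= y -> exp x <= exp y.
Proof. intros [H|H]. left; apply exp_increasing; auto. subst; lra. Qed.

Lemma psum_scal f c n : psum (fun k => f k * c) n = psum f n * c.
Proof. induction n; simpl. ring. rewrite IHn. ring. Qed.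

Lemma psum_le f g n : (forall k, f k <= g k) -> psum f n <= psum g n.
Proof. intros H. induction n; simpl. lra. specialize (H n). lra. Qed.

Lemma ex_series_nq q : 0 < q < 1 -> ex_series (fun n => INR (S n) * q ^ n).
Proof.
  intros Hq.
  assert (H : ex_series (fun n => Rabs (INR (S n) * q ^ n))).
  { apply (ex_series_DAlembert _ q). lra.
    - intros n. apply Rgt_not_eq. apply Rmult_lt_0_compat. apply lt_0_INR; lia. apply pow_lt; lra.
    - eapply is_lim_seq_ext.
      + intros n. symmetry.
        replace (INR (S (S n)) * q ^ S n / (INR (S n) * q ^ n)) with (q * (1 + / INR (S n))).
        rewrite Rabs_right. reflexivity.
        assert (0 < / INR (S n)) by (apply Rinv_0_lt_compat, lt_0_INR; lia). nra.
        rewrite !S_INR. simpl. field. split. apply Rgt_not_eq. apply pow_lt; lra.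
        pose proof (pos_INR n). lra.
      + assert (HL : is_lim_seq (fun n => q * (1 + / INR (S n))) (q * (1 + 0))).
        { apply is_lim_seq_mult'. apply is_lim_seq_const.
          apply is_lim_seq_plus'. apply is_lim_seq_const.
          replace (Finite 0) with (Rbar_inv p_infty) by reflexivity.
          apply is_lim_seq_inv. apply -> (is_lim_seq_incr_1 INR). apply is_lim_seq_INR. discriminate. }
        rewrite Rplus_0_r, Rmult_1_r in HL. exact HL. }
  eapply ex_series_ext; [|apply H]. intros n. apply Rabs_right.
  apply Rle_ge, Rmult_le_pos. apply pos_INR. apply pow_le; lra.
Qed.

Lemma Rabs_le_ex (f g : nat -> R) : (forall n, 0 <= f n <= g n) -> ex_series g -> ex_series f.
Proof.
  intros H Hg. apply (ex_series_le f g); auto. intros n. change norm with Rabs. simpl.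
  rewrite Rabs_right; [apply H|apply Rle_ge, H].
Qed.

Section Parts.
Variables (a b : nat -> R).
Hypothesis ha : forall n, (1 <= n)%nat -> 0 < a n.

Lemma est_i (hs : ex_series (fun n => jdev a b (S n))) dl : 0 < dl ->
  exists e B, ex_series e /\ forall z, Cmod z <= 1 -> dl <= Cmod (1 - z * z)%C -> forall n,
    Cmod (gn a b (S n) z - gn a b n z)%C <= e n /\
    Cmod ((1 - z*z) * cn a b n z - gn a b n z)%C + Cmod (gn a b n z) <= B.
Proof.
  intros Hdl. destruct (exists_m a b ha hs) as [m [Hm Ham]].
  set (K := 2 * (1 + 2 / dl) / m + 2 / dl).
  set (SS := Series (fun n => jdev a b (S n))).
  set (B := 2 * exp (SS * K)).
  assert (HY : forall n, Yp (kap a b m dl) n <= exp (SS * K)).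
  { intros n. eapply Rle_trans. apply Yp_exp. apply (kap_ge0 a b m dl Hm Hdl).
    apply exp_mono. unfold kap. fold K. rewrite psum_scal.
    assert (0 <= K). { unfold K. assert (0 < 2/dl) by (apply Rdiv_lt_0_compat; lra).
      assert (0 < 2 * (1 + 2 / dl) / m) by (apply Rdiv_lt_0_compat; lra). lra. }
    apply Rmult_le_compat_r; auto. apply psum_le_Series; auto. intros; apply jdev_ge0. }
  exists (fun n => jdev a b (S n) * ((1 + 2 / dl) / m * B)), B. split.
  - apply ex_series_scal_r. auto.
  - intros z Hz Hd n. destruct (val_bdry a b ha m dl z Hm Hdl Ham Hz Hd n) as [H1 H2].
    assert (0 < (1 + 2/dl)/m). { apply Rdiv_lt_0_compat; [|lra]. assert (0 < 2/dl) by (apply Rdiv_lt_0_compat; lra). lra. }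
    pose proof (jdev_ge0 a b (S n)). specialize (HY n).
    split.
    + eapply Rle_trans; [apply H2|]. unfold B.
      replace (jdev a b (S n) * (1 + 2 / dl) / m * (2 * Yp (kap a b m dl) n)) with
        (jdev a b (S n) * ((1 + 2 / dl) / m * (2 * Yp (kap a b m dl) n))) by (unfold Rdiv; ring).
      apply Rmult_le_compat_l; auto. apply Rmult_le_compat_l; lra.
    + unfold B. lra.
Qed.

Lemma est_t (hs : ex_series (fun n => jdev a b (S n))) t : 1 <= t ->
  ex_series (fun n => jdev a b (S n) * (INR (S n) * t ^ (2 * n))) ->
  exists e, ex_series e /\ forall z, Cmod z <= t -> forall n, Cmod (gn a b (S n) z - gn a b n z)%C <= e n.
Proof.
  intros Ht Hs2. destruct (exists_m a b ha hs) as [m [Hm Ham]].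
  set (SS := Series (fun n => jdev a b (S n))).
  set (E := exp SS).
  set (psi := fun n => jdev a b (S n) * (1 + t + t^2) * (1 + E * (INR (S n) * t ^ (2 * n))) / m).
  assert (Hth : forall n, 0 <= th a b t m n <= psi n).
  { intros n. split. apply th_ge0; auto; lra.
    unfold th, psi. unfold Rdiv. apply Rmult_le_compat_r. left; apply Rinv_0_lt_compat; lra.
    apply Rmult_le_compat_l. apply Rmult_le_pos. apply jdev_ge0. nra.
    apply Rplus_le_compat_l. eapply Rle_trans. apply (Lseq_bound a b t m Hm Ham).
    apply Rmult_le_compat.
    - apply Rle_trans with 1; [lra|]. apply Yp_ge1. intros; apply jdev_ge0.
    - apply Rle_trans with 1; [lra|]. apply Sg_ge1.
    - eapply Rle_trans. apply Yp_exp. intros; apply jdev_ge0. apply exp_mono.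
      apply psum_le_Series; auto. intros; apply jdev_ge0.
    - apply Sg_ge1t. auto. }
  assert (Hpsi : ex_series psi).
  { unfold psi. 
    apply (Rabs_le_ex _ (fun n => (jdev a b (S n) + jdev a b (S n) * (INR (S n) * t ^ (2 * n)) * E) * ((1 + t + t^2) / m))).
    - intros n. pose proof (jdev_ge0 a b (S n)). assert (0 < E) by apply exp_pos.
      assert (0 <= INR (S n) * t ^ (2 * n)) by (apply Rmult_le_pos; [apply pos_INR| apply pow_le; lra]).
      split. unfold Rdiv. apply Rmult_le_pos; [|left; apply Rinv_0_lt_compat; lra].
      apply Rmult_le_pos. nra. nra.
      right. field. lra.
    - apply ex_series_scal_r.
      exact (ex_series_plus (K:=R_AbsRing) (V:=R_NormedModule) (fun n => jdev a b (S n)) (fun n => jdev a b (S n) * (INR (S n) * t ^ (2 * n)) * E) hs (ex_series_scal_r E _ Hs2)). }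
  exists (fun n => psi n * exp (Series psi)). split.
  - apply ex_series_scal_r. auto.
  - intros z Hz n. eapply Rle_trans. apply (val_core a b ha t m z ltac:(lra) Hm Ham Hz n).
    destruct (Hth n) as [H1 H2]. apply Rmult_le_compat; auto.
    apply Rle_trans with 1; [lra|]. apply Yp_ge1. intros; apply th_ge0; auto; lra.
    eapply Rle_trans. apply Yp_exp. intros; apply th_ge0; auto; lra. apply exp_mono.
    eapply Rle_trans. apply psum_le. intros k; apply (Hth k).
    apply psum_le_Series; auto. intros k. pose proof (Hth k). lra.
Qed.
End Parts.

Definition contC (f : C -> C) (z : C) : Prop :=
  forall eps, 0 < eps -> exists del, 0 < del /\ forall w, Cmod (w - z)%C < del -> Cmod (f w - f z)%C < eps.

Lemma contC_const c z : contC (fun _ => c) z.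
Proof. intros eps He. exists 1. split. lra. intros w _. replace (c - c)%C with (RtoC 0) by ring. rewrite Cmod_0. auto. Qed.

Lemma contC_id z : contC (fun w => w) z.
Proof. intros eps He. exists eps. split; auto. Qed.

Lemma contC_plus f g z : contC f z -> contC g z -> contC (fun w => f w + g w)%C z.
Proof.
  intros Hf Hg eps He. destruct (Hf (eps/2) ltac:(lra)) as [d1 [Hd1 H1]].
  destruct (Hg (eps/2) ltac:(lra)) as [d2 [Hd2 H2]].
  exists (Rmin d1 d2). split. apply Rmin_pos; auto. intros w Hw.
  replace (f w + g w - (f z + g z))%C with ((f w - f z) + (g w - g z))%C by ring.
  eapply Rle_lt_trans; [apply Cmod_triangle|].
  specialize (H1 w ltac:(eapply Rlt_le_trans; [apply Hw|apply Rmin_l])).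
  specialize (H2 w ltac:(eapply Rlt_le_trans; [apply Hw|apply Rmin_r])). lra.
Qed.

Lemma contC_mult f g z : contC f z -> contC g z -> contC (fun w => f w * g w)%C z.
Proof.
  intros Hf Hg eps He.
  set (M := Cmod (f z) + 1). set (N := Cmod (g z) + 1).
  assert (HM : 0 < M) by (unfold M; pose proof (Cmod_ge_0 (f z)); lra).
  assert (HN : 0 < N) by (unfold N; pose proof (Cmod_ge_0 (g z)); lra).
  destruct (Hf (Rmin 1 (eps / (4 * N))) ltac:(apply Rmin_pos; [lra| apply Rdiv_lt_0_compat; lra])) as [d1 [Hd1 H1]].
  destruct (Hg (Rmin 1 (eps / (4 * M))) ltac:(apply Rmin_pos; [lra| apply Rdiv_lt_0_compat; lra])) as [d2 [Hd2 H2]].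
  exists (Rmin d1 d2). split. apply Rmin_pos; auto. intros w Hw.
  specialize (H1 w ltac:(eapply Rlt_le_trans; [apply Hw|apply Rmin_l])).
  specialize (H2 w ltac:(eapply Rlt_le_trans; [apply Hw|apply Rmin_r])).
  replace (f w * g w - f z * g z)%C with ((f w - f z) * g w + f z * (g w - g z))%C by ring.
  eapply Rle_lt_trans; [apply Cmod_triangle|]. rewrite !Cmod_mult.
  assert (Cmod (g w) <= N).
  { unfold N. replace (g w) with (g z + (g w - g z))%C by ring. eapply Rle_trans; [apply Cmod_triangle|].
    pose proof (Rmin_l 1 (eps / (4 * M))). lra. }
  assert (Cmod (f w - f z)%C <= eps / (4 * N)) by (pose proof (Rmin_r 1 (eps / (4 * N))); lra).
  assert (Cmod (g w - g z)%C <= eps / (4 * M)) by (pose proof (Rmin_r 1 (eps / (4 * M))); lra).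
  assert (Cmod (f w - f z)%C * Cmod (g w) <= eps / (4 * N) * N).
  { apply Rmult_le_compat; auto; apply Cmod_ge_0. }
  assert (Cmod (f z) * Cmod (g w - g z)%C <= M * (eps / (4 * M))).
  { apply Rmult_le_compat; auto; try apply Cmod_ge_0. unfold M; lra. }
  assert (eps / (4 * N) * N = eps / 4) by (field; lra).
  assert (M * (eps / (4 * M)) = eps / 4) by (field; lra).
  lra.
Qed.

Lemma contC_ext f g z : (forall w, f w = g w) -> contC f z -> contC g z.
Proof. intros H Hf eps He. destruct (Hf eps He) as [d [Hd H1]]. exists d. split; auto. intros w Hw. rewrite <- !H. auto. Qed.

Lemma contC_step f g z (al be ga : R) : contC f z -> contC g z ->
  contC (fun w => ((1 + w*w - RtoC be * w) * f w - RtoC ga * w * w * g w) / RtoC al)%C z.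
Proof.
  intros Hf Hg.
  apply (contC_ext (fun w => ((1 + w*w + (- RtoC be) * w) * f w + (- RtoC ga) * w * w * g w) * (/ RtoC al))%C).
  { intros w. unfold Cdiv. ring. }
  apply contC_mult; [|apply contC_const].
  apply contC_plus; apply contC_mult; auto.
  - apply contC_plus. apply contC_plus. apply contC_const. apply contC_mult; apply contC_id.
    apply contC_mult. apply contC_const. apply contC_id.
  - apply contC_mult. apply contC_mult. apply contC_const. apply contC_id. apply contC_id.
Qed.

Section ContG.
Variables (a b : nat -> R).
Hypothesis ha : forall n, (1 <= n)%nat -> 0 < a n.

Lemma cont_cn z n : contC (cn a b n) z /\ contC (cprev a b n) z.
Proof.
  induction n as [|n [IH1 IH2]].
  - split. apply (contC_ext (fun _ => RtoC 1)). intros; rewrite (cn_0 a b); auto. apply contC_const.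
    apply contC_const.
  - split; [|exact IH1].
    apply (contC_ext (fun w => ((1 + w*w - RtoC (b (S n)) * w) * cn a b n w - RtoC (a0 a n) * w * w * cprev a b n w) / RtoC (a (S n)))%C).
    { intros w. rewrite (cn_S a b ha n). reflexivity. }
    apply contC_step; auto.
Qed.

Lemma cont_gn z n : contC (gn a b n) z.
Proof.
  destruct n as [|n].
  - apply (contC_ext (fun _ => RtoC 1)). intros; rewrite (gn_0 a b); auto. apply contC_const.
  - apply (contC_ext (fun w => cn a b (S n) w + (- RtoC (a (S n))) * w * w * cn a b n w)%C).
    { intros w. simpl gn. ring. }
    apply contC_plus. apply cont_cn. apply contC_mult. apply contC_mult. apply contC_mult.
    apply contC_const. apply contC_id. apply contC_id. apply cont_cn.
Qed.
End ContG.

Lemma Cmod_rev u v : Rabs (Cmod u - Cmod v) <= Cmod (u - v)%C.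
Proof.
  assert (Cmod u <= Cmod v + Cmod (u - v)%C).
  { replace u with (v + (u - v))%C at 1 by ring. apply Cmod_triangle. }
  assert (Cmod v <= Cmod u + Cmod (u - v)%C).
  { replace v with (u + - (u - v))%C at 1 by ring. eapply Rle_trans; [apply Cmod_triangle|]. rewrite Cmod_opp. lra. }
  apply Rabs_le. lra.
Qed.

Lemma ball_Cmod (z y : C) (e : R) : @ball C_UniformSpace z e y -> Cmod (y - z)%C < 4 * e.
Proof.
  intros [H1 H2]. eapply Rle_lt_trans; [apply Cmod_le_2|].
  change (fst (y - z)%C) with (fst y - fst z). change (snd (y - z)%C) with (snd y - snd z).
  change (Rabs (fst y - fst z) < e) in H1. change (Rabs (snd y - snd z) < e) in H2. lra.
Qed.

Fixpoint lmax (l : list nat) : nat := match l with nil => 0%nat | cons i l' => Nat.max i (lmax l') end.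
Lemma lmax_ge l i : In i l -> (i <= lmax l)%nat.
Proof. induction l; simpl. tauto. intros [H|H]. subst; lia. specialize (IHl H). lia. Qed.

Lemma compact_min (K : C -> Prop) (phi : C -> R) : compact_C K ->
  (forall z eps, 0 < eps -> exists del, 0 < del /\ forall w, Cmod (w - z)%C < del -> Rabs (phi w - phi z) < eps) ->
  (forall z, K z -> 0 < phi z) -> exists del, 0 < del /\ forall z, K z -> del <= phi z.
Proof.
  intros HK Hphi Hpos.
  destruct (HK nat (fun i z => / INR (S i) < phi z)) as [l Hl].
  - intros i z Hz. set (ep := phi z - / INR (S i)).
    destruct (Hphi z ep ltac:(unfold ep; lra)) as [d [Hd Hw]].
    exists (mkposreal (d/4) ltac:(lra)). intros y Hy. simpl in Hy. apply ball_Cmod in Hy.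
    specialize (Hw y ltac:(lra)). apply Rabs_lt_between in Hw. unfold ep in Hw. lra.
  - intros z Hz. destruct (archimed_cor1 (phi z) (Hpos z Hz)) as [N [HN1 HN2]].
    exists (pred N). replace (S (pred N)) with N by lia. auto.
  - exists (/ INR (S (lmax l))). split. apply Rinv_0_lt_compat, lt_0_INR; lia.
    intros z Hz. destruct (Hl z Hz) as [i [Hi Hu]]. left. eapply Rle_lt_trans; [|apply Hu].
    apply Rinv_le_contravar. apply lt_0_INR; lia. apply le_INR. pose proof (lmax_ge l i Hi). lia.
Qed.

Lemma compact_pm1 K : compact_C K -> (forall z, K z -> closed_disk_pm1 z) ->
  exists dl, 0 < dl /\ forall z, K z -> dl <= Cmod (1 - z * z)%C.
Proof.
  intros HK Hsub. apply (compact_min K (fun z => Cmod (1 - z * z)%C) HK).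
  - intros z eps He.
    assert (Hc : contC (fun w => 1 - w * w)%C z).
    { apply (contC_ext (fun w => 1 + (- RtoC 1) * w * w)%C). intros; ring.
      apply contC_plus. apply contC_const. apply contC_mult. apply contC_mult. apply contC_const. apply contC_id. apply contC_id. }
    destruct (Hc eps He) as [d [Hd H]]. exists d. split; auto. intros w Hw.
    eapply Rle_lt_trans; [apply Cmod_rev|]. auto.
  - intros z Hz. destruct (Hsub z Hz) as [_ [H1 H2]]. apply Cmod_gt_0.
    replace (1 - z * z)%C with ((1 - z) * (1 + z))%C by ring. apply Cmult_neq_0.
    + intro H. apply H1. replace z with (1 - (1 - z))%C by ring. rewrite H. apply injective_projections; simpl; ring.
    + intro H. apply H2. replace z with ((1 + z) - 1)%C by ring. rewrite H. apply injective_projections; simpl; ring.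
Qed.

Lemma compact_disk K R0 : compact_C K -> (forall z, K z -> disk_R R0 z) ->
  exists r, r < R0 /\ forall z, K z -> Cmod z <= r.
Proof.
  intros HK Hsub. destruct (compact_min K (fun z => R0 - Cmod z) HK) as [d [Hd H]].
  - intros z eps He. exists eps. split; auto. intros w Hw.
    replace (R0 - Cmod w - (R0 - Cmod z)) with (- (Cmod w - Cmod z)) by ring. rewrite Rabs_Ropp.
    eapply Rle_lt_trans; [apply Cmod_rev|]. auto.
  - intros z Hz. specialize (Hsub z Hz). unfold disk_R in Hsub. lra.
  - exists (R0 - d). split. lra. intros z Hz. specialize (H z Hz). lra.
Qed.

Lemma rec_zero (h eta : nat -> R) q : 0 <= q < 1 -> (forall n, 0 <= h n) ->
  (forall n, h (S n) <= q * h n + eta n) -> (forall eps, 0 < eps -> exists N, forall n, (N <= n)%nat -> eta n <= eps) ->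
  forall eps, 0 < eps -> exists N, forall n, (N <= n)%nat -> h n < eps.
Proof.
  intros Hq Hh Hrec Heta eps He.
  destruct (Heta (eps * (1 - q) / 2) ltac:(apply Rdiv_lt_0_compat; [apply Rmult_lt_0_compat|]; lra)) as [N0 HN0].
  set (A := Rabs (h N0 - eps/2)).
  assert (HA : 0 <= A) by apply Rabs_pos.
  assert (Hk : forall j, h (N0 + j)%nat - eps/2 <= q ^ j * A).
  { induction j.
    - rewrite Nat.add_0_r. simpl. rewrite Rmult_1_l. apply Rle_abs.
    - replace (N0 + S j)%nat with (S (N0 + j)) by lia. pose proof (Hrec (N0 + j)%nat).
      pose proof (HN0 (N0 + j)%nat ltac:(lia)). simpl pow.
      assert (q * (h (N0 + j)%nat - eps / 2) <= q * (q ^ j * A)) by (apply Rmult_le_compat_l; lra).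
      assert (eps * (1 - q) / 2 = eps / 2 - q * (eps / 2)) by field. nra. }
  destruct (pow_lt_1_zero q ltac:(rewrite Rabs_right; lra) (eps / 2 / (A + 1)) ltac:(apply Rdiv_lt_0_compat; lra)) as [N1 HN1].
  exists (N0 + N1)%nat. intros n Hn. replace n with (N0 + (n - N0))%nat by lia.
  specialize (Hk (n - N0)%nat). specialize (HN1 (n - N0)%nat ltac:(lia)).
  rewrite Rabs_right in HN1 by (apply Rle_ge, pow_le; lra).
  assert (q ^ (n - N0) * A <= eps / 2 / (A + 1) * A) by (apply Rmult_le_compat_r; lra).
  assert (eps / 2 / (A + 1) * A < eps / 2).
  { apply (Rmult_lt_reg_r (A + 1)). lra. replace (eps / 2 / (A + 1) * A * (A + 1)) with (eps / 2 * A) by (field; lra). nra. }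
  lra.
Qed.

Lemma cont_transfer (f : nat -> C -> C) u (S T : C -> Prop) z :
  unif_cv_on f u T -> (forall n, contC (f n) z) -> T z ->
  (exists d0, 0 < d0 /\ forall w, S w -> Cmod (w - z)%C < d0 -> T w) ->
  forall eps, 0 < eps -> exists del, 0 < del /\ forall w, S w -> Cmod (w - z)%C < del -> Cmod (u w - u z)%C < eps.
Proof.
  intros Hu Hc Hz [d0 [Hd0 HT]] eps He.
  destruct (Hu (eps/3) ltac:(lra)) as [N HN].
  destruct (Hc N (eps/3) ltac:(lra)) as [d1 [Hd1 H1]].
  exists (Rmin d0 d1). split. apply Rmin_pos; auto. intros w Hw Hwz.
  assert (Tw : T w) by (apply HT; auto; eapply Rlt_le_trans; [apply Hwz|apply Rmin_l]).
  specialize (H1 w ltac:(eapply Rlt_le_trans; [apply Hwz|apply Rmin_r])).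
  pose proof (HN N w (le_n N) Tw). pose proof (HN N z (le_n N) Hz).
  replace (u w - u z)%C with (- (f N w - u w) + (f N w - f N z) + (f N z - u z))%C by ring.
  eapply Rle_lt_trans; [apply Cmod_triangle|]. eapply Rle_lt_trans; [apply Rplus_le_compat_r; apply Cmod_triangle|].
  rewrite Cmod_opp. lra.
Qed.

Section Final.
Variables (a b : nat -> R).
Hypothesis ha : forall n, (1 <= n)%nat -> 0 < a n.

Definition u := ulim (gn a b).

Lemma part_ii : ex_series (fun n => INR (S n) * jdev a b (S n)) ->
  (forall z, closed_disk z -> cv_C (fun n => gn a b n z) (u z)) /\
  unif_cv_on (gn a b) u closed_disk /\ continuous_on_C u closed_disk.
Proof.
  intros Hs.
  assert (Hs1 : ex_series (fun n => jdev a b (S n))).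
  { refine (Rabs_le_ex _ _ _ Hs). intros n. pose proof (jdev_ge0 a b (S n)).
    split; auto. rewrite S_INR. pose proof (pos_INR n). nra. }
  destruct (est_t a b ha Hs1 1 ltac:(lra)) as [e [He Hb]].
  { eapply ex_series_ext; [|apply Hs]. intros n. cbv beta. rewrite pow1. rewrite Rmult_1_r. apply Rmult_comm. }
  destruct (unif_lim (gn a b) closed_disk e He) as [U P].
  { intros n z Hz. apply Hb. auto. }
  split; [exact P|]. split; [exact U|].
  intros z Hz. apply (cont_transfer (gn a b) u closed_disk closed_disk z U); auto.
  intros n. apply cont_gn; auto. exists 1. split. lra. auto.
Qed.
End Final.

Section Final3.
Variables (a b : nat -> R).
Hypothesis ha : forall n, (1 <= n)%nat -> 0 < a n.

Lemma unif_restrict f g (S T : C -> Prop) : unif_cv_on f g T -> (forall z, S z -> T z) -> unif_cv_on f g S.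
Proof. intros H HST eps He. destruct (H eps He) as [N HN]. exists N. intros n z Hn Hz. apply HN; auto. Qed.

Lemma part_iii C0 R0 : 1 < R0 -> (forall n, (1 <= n)%nat -> jdev a b n <= C0 * / R0 ^ (2 * n)) ->
  (forall z, disk_R R0 z -> cv_C (fun n => gn a b n z) (u a b z)) /\ unif_cv_compacts (gn a b) (u a b) (disk_R R0).
Proof.
  intros HR HJ.
  set (q := / R0 ^ 2).
  assert (HR2 : 1 < R0 ^ 2) by nra.
  assert (Hq : 0 < q < 1).
  { unfold q. split. apply Rinv_0_lt_compat; lra. rewrite <- Rinv_1. apply Rinv_lt_contravar; lra. }
  assert (Hpow : forall k, / R0 ^ (2 * k) = q ^ k).
  { intros k. unfold q. rewrite pow_mult. rewrite pow_inv. reflexivity. }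
  assert (HJ' : forall n, jdev a b (S n) <= C0 * q * q ^ n).
  { intros n. rewrite Rmult_assoc. rewrite (tech_pow_Rmult q n). rewrite <- Hpow. apply HJ. lia. }
  assert (HC0 : 0 <= C0).
  { pose proof (HJ' 0%nat). pose proof (jdev_ge0 a b 1). simpl in H. nra. }
  assert (Hs1 : ex_series (fun n => jdev a b (S n))).
  { refine (Rabs_le_ex _ (fun n => q ^ n * (C0 * q)) _ _).
    intros n. split. apply jdev_ge0. rewrite Rmult_comm. apply HJ'.
    apply ex_series_scal_r. apply ex_series_geom. rewrite Rabs_right; lra. }
  assert (Hconv : forall t, 1 <= t < R0 -> unif_cv_on (gn a b) (u a b) (fun z => Cmod z <= t) /\
            forall z, Cmod z <= t -> cv_C (fun n => gn a b n z) (u a b z)).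
  { intros t Ht.
    set (s := q * t ^ 2).
    assert (Hs : 0 < s < 1).
    { unfold s, q. split. apply Rmult_lt_0_compat. apply Rinv_0_lt_compat; lra. nra.
      apply (Rmult_lt_reg_l (R0 ^ 2)). lra. rewrite <- Rmult_assoc, Rinv_r by lra. nra. }
    destruct (est_t a b ha Hs1 t ltac:(lra)) as [e [He Hb]].
    { refine (Rabs_le_ex _ (fun n => INR (S n) * s ^ n * (C0 * q)) _ _).
      - intros n. pose proof (jdev_ge0 a b (S n)). assert (0 <= INR (S n) * t ^ (2 * n)).
        { apply Rmult_le_pos. apply pos_INR. apply pow_le; lra. }
        split. apply Rmult_le_pos; auto.
        unfold s. rewrite Rpow_mult_distr. rewrite pow_mult.
        replace (INR (S n) * (q ^ n * (t ^ 2) ^ n) * (C0 * q)) with ((C0 * q * q ^ n) * (INR (S n) * (t ^ 2) ^ n)) by ring.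
        rewrite <- pow_mult. apply Rmult_le_compat_r; auto.
      - apply ex_series_scal_r. apply ex_series_nq. auto. }
    destruct (unif_lim (gn a b) (fun z => Cmod z <= t) e He) as [U P].
    { intros n z Hz. apply Hb. auto. }
    split; auto. }
  split.
  - intros z Hz. unfold disk_R in Hz. apply (proj2 (Hconv (Rmax 1 (Cmod z)) ltac:(split; [apply Rmax_l| apply Rmax_lub_lt; lra]))).
    apply Rmax_r.
  - intros K HK Hsub. destruct (compact_disk K R0 HK Hsub) as [r [Hr Hrz]].
    apply (unif_restrict _ _ _ (fun z => Cmod z <= Rmax 1 r)).
    apply Hconv. split. apply Rmax_l. apply Rmax_lub_lt; lra.
    intros z Hz. eapply Rle_trans; [apply Hrz; auto|apply Rmax_r].
Qed.
End Final3.

Lemma pm1_pos z : closed_disk_pm1 z -> 0 < Cmod (1 - z * z)%C.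
Proof.
  intros [_ [H1 H2]]. apply Cmod_gt_0.
  replace (1 - z * z)%C with ((1 - z) * (1 + z))%C by ring. apply Cmult_neq_0.
  + intro H. apply H1. replace z with (1 - (1 - z))%C by ring. rewrite H. apply injective_projections; simpl; ring.
  + intro H. apply H2. replace z with ((1 + z) - 1)%C by ring. rewrite H. apply injective_projections; simpl; ring.
Qed.

Lemma cont_1zz z : contC (fun w => 1 - w * w)%C z.
Proof.
  apply (contC_ext (fun w => 1 + (- RtoC 1) * w * w)%C). intros; ring.
  apply contC_plus. apply contC_const. apply contC_mult. apply contC_mult. apply contC_const. apply contC_id. apply contC_id.
Qed.

Section Final1.
Variables (a b : nat -> R).
Hypothesis ha : forall n, (1 <= n)%nat -> 0 < a n.
Hypothesis hs : ex_series (fun n => jdev a b (S n)).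

Definition Sdl (dl : R) (z : C) : Prop := Cmod z <= 1 /\ dl <= Cmod (1 - z * z)%C.

Lemma conv_dl dl : 0 < dl -> unif_cv_on (gn a b) (u a b) (Sdl dl) /\ forall z, Sdl dl z -> cv_C (fun n => gn a b n z) (u a b z).
Proof.
  intros Hdl. destruct (est_i a b ha hs dl Hdl) as [e [B [He Hb]]].
  apply (unif_lim (gn a b) (Sdl dl) e He). intros n z [Hz1 Hz2]. apply (Hb z Hz1 Hz2 n).
Qed.

Lemma H_rec z n : Cmod ((1 - z * z) * cn a b (S n) z - gn a b (S n) z)%C <=
  Cmod (z * z)%C * (Cmod ((1 - z * z) * cn a b n z - gn a b n z)%C + Cmod (gn a b (S n) z - gn a b n z)%C)
  + Cmod (1 - z * z)%C * Rabs (1 - a (S n)) * Cmod (z * z)%C * Cmod (cn a b n z).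
Proof.
  rewrite (rel_c a b).
  replace ((1 - z * z) * (gn a b (S n) z + RtoC (a (S n)) * z * z * cn a b n z) - gn a b (S n) z)%C
    with ((z * z) * (((1 - z * z) * cn a b n z - gn a b n z) - (gn a b (S n) z - gn a b n z)) + (1 - z * z) * (RtoC (a (S n)) - 1) * (z * z) * cn a b n z)%C by ring.
  eapply Rle_trans; [apply Cmod_triangle|]. rewrite (Cmod_mult (z * z)%C).
  assert (T : Cmod (((1 - z * z) * cn a b n z - gn a b n z) - (gn a b (S n) z - gn a b n z))%C <= Cmod ((1 - z * z) * cn a b n z - gn a b n z)%C + Cmod (gn a b (S n) z - gn a b n z)%C).
  { pose proof (Cmod_triangle ((1 - z * z) * cn a b n z - gn a b n z)%C (- (gn a b (S n) z - gn a b n z))%C) as T.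
    rewrite Cmod_opp in T. exact T. }
  apply Rplus_le_compat. apply Rmult_le_compat_l. apply Cmod_ge_0. auto.
  rewrite !Cmod_mult.
  replace (RtoC (a (S n)) - 1)%C with (RtoC (- (1 - a (S n)))) by (apply injective_projections; simpl; ring).
  rewrite Cmod_RtoC, Rabs_Ropp. right. ring.
Qed.

Lemma part_i_cn z : open_disk z -> cv_C (fun n => cn a b n z) (u a b z / (1 - z * z))%C.
Proof.
  intros Hz. unfold open_disk in Hz.
  assert (Hpm : closed_disk_pm1 z).
  { split. lra. split; intro H; subst; [rewrite Cmod_1 in Hz| rewrite Cmod_R, Rabs_m1 in Hz]; lra. }
  set (dl := Cmod (1 - z * z)%C). assert (Hdl : 0 < dl) by (apply pm1_pos; auto).
  destruct (est_i a b ha hs dl Hdl) as [e [B [He Hb]]].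
  assert (HS : Sdl dl z) by (split; [lra| unfold dl; lra]).
  destruct HS as [HS1 HS2].
  assert (Hx : forall n, Cmod (cn a b n z) <= B / dl).
  { intros n. destruct (Hb z HS1 HS2 n) as [_ HB].
    apply (Rmult_le_reg_r dl); auto. unfold Rdiv. rewrite Rmult_assoc, Rinv_l, Rmult_1_r by lra.
    unfold dl at 1. rewrite Rmult_comm, <- Cmod_mult.
    eapply Rle_trans; [|apply HB].
    eapply Rle_trans; [|apply (Cmod_triangle ((1 - z * z) * cn a b n z - gn a b n z) (gn a b n z))].
    right. f_equal. ring. }
  set (q := Cmod (z * z)%C).
  assert (Hq : 0 <= q < 1) by (unfold q; rewrite Cmod_mult; pose proof (Cmod_ge_0 z); split; nra).
  set (hh := fun n => Cmod ((1 - z * z) * cn a b n z - gn a b n z)%C).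
  assert (Hdl2 : dl <= 2).
  { unfold dl. unfold Cminus. eapply Rle_trans; [apply Cmod_triangle|]. rewrite Cmod_opp, Cmod_1. unfold q in Hq. lra. }
  assert (HB0 : 0 <= B).
  { destruct (Hb z HS1 HS2 0%nat) as [_ HB]. pose proof (Cmod_ge_0 (gn a b 0 z)). pose proof (Cmod_ge_0 ((1 - z * z) * cn a b 0 z - gn a b 0 z)%C). lra. }
  assert (Hrec : forall n, hh (S n) <= q * hh n + q * (e n + 2 * jdev a b (S n) * (B / dl))).
  { intros n. unfold hh. eapply Rle_trans; [apply H_rec|]. fold q. fold dl.
    destruct (Hb z HS1 HS2 n) as [Hen _].
    pose proof (one_minus_a a b (S n) (ha (S n) ltac:(lia))). pose proof (Rabs_pos (1 - a (S n))).
    pose proof (Cmod_ge_0 (cn a b n z)). specialize (Hx n).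
    assert (dl * Rabs (1 - a (S n)) * Cmod (cn a b n z) <= 2 * jdev a b (S n) * (B / dl)).
    { apply Rmult_le_compat; try nra. }
    assert (q * (dl * Rabs (1 - a (S n)) * Cmod (cn a b n z)) <= q * (2 * jdev a b (S n) * (B / dl))) by (apply Rmult_le_compat_l; lra).
    assert (q * Cmod (gn a b (S n) z - gn a b n z)%C <= q * e n) by (apply Rmult_le_compat_l; lra).
    nra. }
  assert (Hh : forall eps, 0 < eps -> exists N, forall n, (N <= n)%nat -> hh n < eps).
  { apply (rec_zero hh (fun n => q * (e n + 2 * jdev a b (S n) * (B / dl))) q Hq). intros; apply Cmod_ge_0. exact Hrec.
    intros eps Heps.
    apply ex_series_lim_0 in He. apply ex_series_lim_0 in hs.
    apply is_lim_seq_spec in He. apply is_lim_seq_spec in hs.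
    set (K := 2 * (B / dl) + 1).
    assert (HK : 0 < K) by (unfold K; assert (0 <= B / dl) by (apply Rdiv_le_0_compat; lra); lra).
    destruct (He (mkposreal (eps / 2) ltac:(lra))) as [N1 H1].
    destruct (hs (mkposreal (eps / 2 / K) ltac:(apply Rdiv_lt_0_compat; lra))) as [N2 H2].
    exists (N1 + N2)%nat. intros n Hn. specialize (H1 n ltac:(lia)). specialize (H2 n ltac:(lia)). simpl in H1, H2.
    rewrite Rminus_0_r in H1, H2. apply Rabs_lt_between in H1. apply Rabs_lt_between in H2.
    assert (0 <= B / dl) by (apply Rdiv_le_0_compat; lra).
    assert (HKd : K = 2 * (B/dl) + 1) by reflexivity.
    assert (0 <= eps / 2 / K) by (apply Rdiv_le_0_compat; lra).
    assert (2 * jdev a b (S n) * (B / dl) <= eps / 2 / K * K).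
    { pose proof (jdev_ge0 a b (S n)).
      assert (jdev a b (S n) * (2 * (B / dl)) <= eps / 2 / K * (2 * (B / dl))) by (apply Rmult_le_compat_r; lra).
      assert (eps / 2 / K * (2 * (B / dl)) <= eps / 2 / K * K) by (apply Rmult_le_compat_l; lra). nra. }
    assert (eps / 2 / K * K = eps / 2) by (field; lra).
    assert (0 <= eps / 2 / K) by (apply Rdiv_le_0_compat; lra).
    assert (0 <= e n + 2 * jdev a b (S n) * (B / dl) <= eps) by (split; [pose proof (jdev_ge0 a b (S n)); destruct (Hb z HS1 HS2 n) as [Hen _]; pose proof (Cmod_ge_0 (gn a b (S n) z - gn a b n z)%C); nra | lra]).
    apply Rle_trans with (1 * eps). apply Rmult_le_compat; lra. lra. }
  intros eps Heps.
  destruct (Hh (eps * dl / 2) ltac:(apply Rdiv_lt_0_compat; [apply Rmult_lt_0_compat|]; lra)) as [N1 HN1].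
  destruct (proj2 (conv_dl dl Hdl) z (conj HS1 HS2) (eps * dl / 2) ltac:(apply Rdiv_lt_0_compat; [apply Rmult_lt_0_compat|]; lra)) as [N2 HN2].
  exists (N1 + N2)%nat. intros n Hn. specialize (HN1 n ltac:(lia)). specialize (HN2 n ltac:(lia)).
  assert (Hne : (1 - z * z)%C <> RtoC 0) by (intro H; apply Cmod_gt_0 in Hdl; auto; unfold dl in Hdl; rewrite H in Hdl; rewrite Cmod_0 in Hdl; lra).
  replace (cn a b n z - u a b z / (1 - z * z))%C with (((1 - z * z) * cn a b n z - gn a b n z + (gn a b n z - u a b z)) / (1 - z * z))%C by (field; auto).
  rewrite Cmod_div by auto. fold dl. apply (Rmult_lt_reg_r dl); auto. unfold Rdiv. rewrite Rmult_assoc, Rinv_l, Rmult_1_r by lra.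
  eapply Rle_lt_trans; [apply Cmod_triangle|]. unfold hh in HN1. lra.
Qed.
End Final1.

Section Coef.
Variables (z0 : C) (rho : R).
Hypothesis hrho : 0 < rho.

Definition shC (f : nat -> C) (k : nat) : C := match k with O => RtoC 0 | S k' => f k' end.
Definition Zop (f : nat -> C) (k : nat) : C := (z0 * f k + shC f k)%C.
Definition e0 (k : nat) : C := match k with O => RtoC 1 | S _ => RtoC 0 end.

Definition Nrm (f : nat -> C) (D : nat) : R := psum (fun k => Cmod (f k) * rho ^ k) D.

Lemma Nrm_ge0 f D : 0 <= Nrm f D.
Proof. unfold Nrm. induction D; simpl. lra. pose proof (Cmod_ge_0 (f D)). pose proof (pow_le rho D ltac:(lra)). nra. Qed.

Lemma Nrm_ext f g D : (forall k, f k = g k) -> Nrm f D = Nrm g D.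
Proof. intros H. unfold Nrm. induction D; simpl. auto. rewrite IHD, H. auto. Qed.

Lemma Nrm_add f g D : Nrm (fun k => f k + g k)%C D <= Nrm f D + Nrm g D.
Proof.
  unfold Nrm. induction D; simpl. lra. pose proof (Cmod_triangle (f D) (g D)).
  pose proof (pow_le rho D ltac:(lra)).
  assert (Cmod (f D + g D)%C * rho ^ D <= (Cmod (f D) + Cmod (g D)) * rho ^ D) by (apply Rmult_le_compat_r; auto). nra.
Qed.

Lemma Nrm_scal c f D : Nrm (fun k => c * f k)%C D = Cmod c * Nrm f D.
Proof. unfold Nrm. induction D; simpl. ring. rewrite IHD, Cmod_mult. ring. Qed.

Lemma Nrm_sh f D : Nrm (shC f) D <= rho * Nrm f D.
Proof.
  unfold Nrm. assert (H : forall D, psum (fun k => Cmod (shC f k) * rho ^ k) (S D) = rho * psum (fun k => Cmod (f k) * rho ^ k) D).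
  { induction D0; simpl. rewrite Cmod_0. ring. simpl in IHD0. rewrite IHD0. ring. }
  destruct D. simpl. lra. rewrite H. apply Rmult_le_compat_l. lra. simpl.
  pose proof (Cmod_ge_0 (f D)). pose proof (pow_le rho D ltac:(lra)). nra.
Qed.

Lemma Nrm_Z f D : Nrm (Zop f) D <= (Cmod z0 + rho) * Nrm f D.
Proof.
  unfold Zop. eapply Rle_trans; [apply Nrm_add|]. rewrite Nrm_scal. pose proof (Nrm_sh f D). lra.
Qed.

Lemma Nrm_e0 D : Nrm e0 D <= 1.
Proof.
  unfold Nrm. induction D; simpl. lra. destruct D; simpl. rewrite Cmod_1. lra.
  rewrite Cmod_0. simpl in IHD. lra.
Qed.

Lemma Nrm_term f D k : (k < D)%nat -> Cmod (f k) * rho ^ k <= Nrm f D.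
Proof.
  unfold Nrm. induction D; intros Hk. lia. simpl. destruct (Nat.eq_dec k D).
  - subst. pose proof (Nrm_ge0 f D). unfold Nrm in H. lra.
  - pose proof (Cmod_ge_0 (f D)). pose proof (pow_le rho D ltac:(lra)).
    assert (0 <= Cmod (f D) * rho ^ D) by nra. specialize (IHD ltac:(lia)). lra.
Qed.

Fixpoint Csum (f : nat -> C) (n : nat) : C := match n with O => RtoC 0 | S k => (Csum f k + f k)%C end.
Definition Ev (f : nat -> C) (K : nat) (w : C) : C := Csum (fun k => f k * pow_n w k)%C K.

Lemma Ev_ext f g K w : (forall k, f k = g k) -> Ev f K w = Ev g K w.
Proof. intros H. unfold Ev. induction K; simpl. auto. rewrite IHK, H. auto. Qed.
Lemma Ev_add f g K w : Ev (fun k => f k + g k)%C K w = (Ev f K w + Ev g K w)%C.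
Proof. unfold Ev. induction K; simpl. ring. rewrite IHK. ring. Qed.
Lemma Ev_scal c f K w : Ev (fun k => c * f k)%C K w = (c * Ev f K w)%C.
Proof. unfold Ev. induction K; simpl. ring. rewrite IHK. ring. Qed.
Lemma Ev_sh f K w : Ev (shC f) (S K) w = (w * Ev f K w)%C.
Proof.
  unfold Ev. induction K; simpl. change mult with Cmult. change one with (RtoC 1). ring.
  simpl in IHK. rewrite IHK. change mult with Cmult. ring.
Qed.

Definition suppC (f : nat -> C) (s : nat) : Prop := forall k, (s < k)%nat -> f k = RtoC 0.

Lemma Ev_Z f s K w : suppC f s -> (s + 2 <= K)%nat -> Ev (Zop f) K w = ((z0 + w) * Ev f K w)%C.
Proof.
  intros Hs HK. unfold Zop. rewrite Ev_add, Ev_scal.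
  destruct K as [|K]. lia. rewrite Ev_sh.
  replace (Ev f (S K) w) with (Ev f K w + f K * pow_n w K)%C by reflexivity.
  rewrite (Hs K) by lia. ring.
Qed.

Lemma supp_Z f s : suppC f s -> suppC (Zop f) (S s).
Proof. intros H k Hk. unfold Zop. rewrite H by lia. destruct k. lia. simpl. rewrite H by lia. ring. Qed.

Lemma supp_mono f s s' : suppC f s -> (s <= s')%nat -> suppC f s'.
Proof. intros H Hs k Hk. apply H. lia. Qed.

End Coef.

Section Coef2.
Variables (a b : nat -> R).
Hypothesis ha : forall n, (1 <= n)%nat -> 0 < a n.
Variables (z0 : C) (rho : R).
Hypothesis hrho : 0 < rho.

Fixpoint cgc (n : nat) : (nat -> C) * (nat -> C) :=
  match n with
  | O => (e0, e0)
  | S m => let (c, g) := cgc m in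
     let A := RtoC (a (S m)) in let Bb := RtoC (b (S m)) in
     let g' := fun k => (g k + ((1 - A) * g k + (1 - A * A) * Zop z0 (Zop z0 c) k + (- Bb) * Zop z0 c k) * / A)%C in
     (fun k => (g' k + A * Zop z0 (Zop z0 c) k)%C, g')
  end.

Definition cc n := fst (cgc n).
Definition gc n := snd (cgc n).

Lemma gc_S m k : gc (S m) k = (gc m k + ((1 - RtoC (a (S m))) * gc m k + (1 - RtoC (a (S m)) * RtoC (a (S m))) * Zop z0 (Zop z0 (cc m)) k + (- RtoC (b (S m))) * Zop z0 (cc m) k) * / RtoC (a (S m)))%C.
Proof. unfold gc, cc. simpl. destruct (cgc m). reflexivity. Qed.

Lemma cc_S m k : cc (S m) k = (gc (S m) k + RtoC (a (S m)) * Zop z0 (Zop z0 (cc m)) k)%C.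
Proof. unfold gc, cc. simpl. destruct (cgc m). reflexivity. Qed.

Lemma Ev_e0 K w : (1 <= K)%nat -> Ev e0 K w = RtoC 1.
Proof.
  intros HK. induction K. lia. destruct K.
  - unfold Ev. simpl. change one with (RtoC 1). ring.
  - change (Ev e0 (S (S K)) w) with (Ev e0 (S K) w + e0 (S K) * pow_n w (S K))%C.
    rewrite IHK by lia. simpl. ring.
Qed.

Lemma coef_eval w n : suppC (cc n) (2 * n) /\ suppC (gc n) (2 * n) /\
  forall K, (2 * n + 1 <= K)%nat -> Ev (cc n) K w = cn a b n (z0 + w) /\ Ev (gc n) K w = gn a b n (z0 + w).
Proof.
  induction n as [|n [S1 [S2 IH]]].
  - split; [|split].
    + intros k Hk. destruct k. lia. reflexivity.
    + intros k Hk. destruct k. lia. reflexivity.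
    + intros K HK. rewrite (cn_0 a b), (gn_0 a b). split; apply Ev_e0; lia.
  - assert (HA : RtoC (a (S n)) <> RtoC 0) by (intro H; injection H; pose proof (ha (S n) ltac:(lia)); lra).
    assert (SZ : suppC (Zop z0 (cc n)) (S (2 * n))) by (apply supp_Z; auto).
    assert (SZZ : suppC (Zop z0 (Zop z0 (cc n))) (S (S (2 * n)))) by (apply supp_Z; auto).
    assert (SG : suppC (gc (S n)) (2 * S n)).
    { intros k Hk. rewrite gc_S. rewrite S2, SZ, SZZ by lia. ring. }
    split; [|split; auto].
    + intros k Hk. rewrite cc_S. rewrite SG, SZZ by lia. ring.
    + intros K HK. destruct (IH K ltac:(lia)) as [E1 E2].
      assert (EZ : Ev (Zop z0 (cc n)) K w = ((z0 + w) * cn a b n (z0 + w))%C).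
      { rewrite (Ev_Z z0 _ (2 * n)) by (auto; lia). rewrite E1. auto. }
      assert (EZZ : Ev (Zop z0 (Zop z0 (cc n))) K w = ((z0 + w) * ((z0 + w) * cn a b n (z0 + w)))%C).
      { rewrite (Ev_Z z0 _ (S (2 * n))) by (auto; lia). rewrite EZ. auto. }
      assert (EG : Ev (gc (S n)) K w = gn a b (S n) (z0 + w)).
      { rewrite (Ev_ext _ _ _ _ (gc_S n)).
        set (A := RtoC (a (S n))). set (Bb := RtoC (b (S n))).
        transitivity (Ev (gc n) K w + ((1 - A) * Ev (gc n) K w + (1 - A * A) * Ev (Zop z0 (Zop z0 (cc n))) K w + (- Bb) * Ev (Zop z0 (cc n)) K w) * / A)%C.
        { unfold Ev. clear HK E1 E2 EZ EZZ. induction K; simpl. ring. rewrite IHK. ring. }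
        rewrite E2, EZ, EZZ.
        pose proof (rel_g a b ha n (z0 + w)) as RG. fold A Bb in RG.
        replace (gn a b (S n) (z0 + w)) with (gn a b n (z0 + w) + (gn a b (S n) (z0 + w) - gn a b n (z0 + w)))%C by ring.
        rewrite RG. field. auto. }
      split; auto.
      rewrite (Ev_ext _ _ _ _ (cc_S n)). rewrite Ev_add, Ev_scal. rewrite EG, EZZ.
      rewrite (rel_c a b). ring.
Qed.
End Coef2.

Section Coef3.
Variables (a b : nat -> R).
Hypothesis ha : forall n, (1 <= n)%nat -> 0 < a n.
Variables (z0 : C) (rho m : R).
Hypothesis hrho : 0 < rho.
Hypothesis hm : 0 < m.
Hypothesis ham : forall n, m <= a (S n).

Let t := Cmod z0 + rho.
Let cc' := cc a b z0.
Let gc' := gc a b z0.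

Definition dgc n k := (gc a b z0 (S n) k - gc a b z0 n k)%C.

Lemma coef_core D n : Nrm rho (dgc n) D <= th a b t m n * Yp (th a b t m) n.
Proof.
  assert (Ht : 0 <= t) by (unfold t; pose proof (Cmod_ge_0 z0); lra).
  assert (HZZ : forall f, Nrm rho (Zop z0 (Zop z0 f)) D <= t ^ 2 * Nrm rho f D).
  { intros f. eapply Rle_trans. apply (Nrm_Z z0 rho hrho). fold t.
    pose proof (Nrm_Z z0 rho hrho f D). fold t in H. simpl. rewrite Rmult_1_r.
    rewrite Rmult_assoc. apply Rmult_le_compat_l; auto. }
  refine (proj2 (proj2 (core_inv a b t m Ht hm ham (fun n => Nrm rho (cc a b z0 n) D) (fun n => Nrm rho (gc a b z0 n) D)
    (fun n => Nrm rho (dgc n) D) _ _ _ _ _ n))).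
  - apply Nrm_e0. 
  - apply Nrm_e0.
  - intros k. cbv beta. rewrite (Nrm_ext rho _ _ D (cc_S a b z0 k)).
    eapply Rle_trans; [apply (Nrm_add rho hrho)|]. rewrite Nrm_scal. rewrite Cmod_RtoC.
    pose proof (ha (S k) ltac:(lia)). rewrite Rabs_right by lra.
    apply Rplus_le_compat_l. rewrite Rmult_assoc. apply Rmult_le_compat_l. lra. apply HZZ.
  - intros k. cbv beta. pose proof (ha (S k) ltac:(lia)) as Hak.
    assert (HA : RtoC (a (S k)) <> RtoC 0) by (intro H; injection H; lra).
    set (A := RtoC (a (S k))). set (Bb := RtoC (b (S k))).
    rewrite (Nrm_ext rho _ (fun j => ((/ A * (1 - A)) * gc a b z0 k j + ((/ A * (1 - A * A)) * Zop z0 (Zop z0 (cc a b z0 k)) j + (/ A * - Bb) * Zop z0 (cc a b z0 k) j)))%C).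
    2:{ intros j. unfold dgc. rewrite (gc_S a b z0 k j). fold A Bb. field. auto. }
    eapply Rle_trans; [apply (Nrm_add rho hrho)|]. rewrite Nrm_scal.
    eapply Rle_trans; [apply Rplus_le_compat_l; apply (Nrm_add rho hrho)|]. rewrite !Nrm_scal.
    assert (HiA : Cmod (/ A) = / a (S k)).
    { rewrite Cmod_inv by auto. unfold A. rewrite Cmod_RtoC, Rabs_right by lra. auto. }
    rewrite !Cmod_mult, HiA.
    replace (1 - A)%C with (RtoC (1 - a (S k))) by (unfold A; apply injective_projections; simpl; ring).
    replace (1 - A * A)%C with (RtoC (1 - a (S k) ^ 2)) by (unfold A; apply injective_projections; simpl; ring).
    replace (- Bb)%C with (RtoC (- b (S k))) by (unfold Bb; apply injective_projections; simpl; ring).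
    rewrite !Cmod_RtoC, Rabs_Ropp.
    pose proof (HZZ (cc a b z0 k)). pose proof (Nrm_Z z0 rho hrho (cc a b z0 k) D). fold t in H0.
    pose proof (Rabs_pos (1 - a (S k) ^ 2)). pose proof (Rabs_pos (b (S k))).
    assert (Hi : 0 < / a (S k)) by (apply Rinv_0_lt_compat; lra).
    assert (/ a (S k) * Rabs (1 - a (S k) ^ 2) * Nrm rho (Zop z0 (Zop z0 (cc a b z0 k))) D <= / a (S k) * Rabs (1 - a (S k) ^ 2) * (t ^ 2 * Nrm rho (cc a b z0 k) D)).
    { apply Rmult_le_compat_l; auto. apply Rmult_le_pos; lra. }
    assert (/ a (S k) * Rabs (b (S k)) * Nrm rho (Zop z0 (cc a b z0 k)) D <= / a (S k) * Rabs (b (S k)) * (t * Nrm rho (cc a b z0 k) D)).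
    { apply Rmult_le_compat_l; auto. apply Rmult_le_pos; lra. }
    unfold Rdiv. 
    assert (E : (Rabs (1 - a (S k)) * Nrm rho (gc a b z0 k) D + (Rabs (1 - a (S k) ^ 2) * t ^ 2 + Rabs (b (S k)) * t) * Nrm rho (cc a b z0 k) D) * / a (S k)
      = / a (S k) * Rabs (1 - a (S k)) * Nrm rho (gc a b z0 k) D + (/ a (S k) * Rabs (1 - a (S k) ^ 2) * (t ^ 2 * Nrm rho (cc a b z0 k) D) + / a (S k) * Rabs (b (S k)) * (t * Nrm rho (cc a b z0 k) D))) by ring.
    rewrite E. lra.
  - intros k. cbv beta.
    rewrite (Nrm_ext rho (gc a b z0 (S k)) (fun j => gc a b z0 k j + dgc k j)%C) by (intros j; unfold dgc; ring).
    apply (Nrm_add rho hrho).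
Qed.
End Coef3.

Lemma Cmod_ball (x y : C) (e : R) : Cmod (x - y)%C < e -> @ball (NormedModule.UniformSpace C_AbsRing C_NormedModule) y e x.
Proof.
  intros H. split.
  - pose proof (fst_le_Cmod (x - y)%C) as H1. change (Rabs (fst x - fst y) <= Cmod (x - y)%C) in H1.
    change (Rabs (fst x - fst y) < e). lra.
  - pose proof (snd_le_Cmod (x - y)%C) as H1. change (Rabs (snd x - snd y) <= Cmod (x - y)%C) in H1.
    change (Rabs (snd x - snd y) < e). lra.
Qed.

Lemma Cmod_pow_n w k : Cmod (pow_n w k) = Cmod w ^ k.
Proof. induction k; simpl. apply Cmod_1. change mult with Cmult. rewrite Cmod_mult, IHk. auto. Qed.

Lemma sum_n_Csum (f : nat -> C) K : sum_n f K = Csum f (S K).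
Proof. induction K. rewrite sum_O. simpl. change plus with Cplus. ring. rewrite sum_Sn, IHK. simpl. reflexivity. Qed.

Lemma Csum_bound rho f w K : 0 < rho -> Cmod w <= rho -> Cmod (Csum (fun k => f k * pow_n w k)%C K) <= Nrm rho f K.
Proof.
  intros Hr Hw. induction K; simpl. rewrite Cmod_0. unfold Nrm. simpl. lra.
  eapply Rle_trans; [apply Cmod_triangle|]. unfold Nrm in *. simpl. apply Rplus_le_compat; auto.
  rewrite Cmod_mult, Cmod_pow_n. apply Rmult_le_compat_l. apply Cmod_ge_0.
  apply pow_incr. split; auto. apply Cmod_ge_0.
Qed.

Lemma Csum_split (p g h : nat -> C) N : Csum (fun k => p k * g k)%C N = (Csum (fun k => (g k - h k) * p k)%C N + Csum (fun k => h k * p k)%C N)%C.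
Proof. induction N; simpl. ring. rewrite IHN. ring. Qed.

Section Analytic.
Variables (a b : nat -> R).
Hypothesis ha : forall n, (1 <= n)%nat -> 0 < a n.
Hypothesis hs : ex_series (fun n => jdev a b (S n)).

Lemma analytic : analytic_on (u a b) open_disk.
Proof.
  intros z0 Hz0. unfold open_disk in Hz0.
  set (rho := (1 - Cmod z0) / 2).
  assert (Hrho : 0 < rho) by (unfold rho; lra).
  set (t := Cmod z0 + rho).
  assert (Ht : 0 <= t < 1) by (unfold t, rho; pose proof (Cmod_ge_0 z0); lra).
  destruct (exists_m a b ha hs) as [m [Hm Ham]].
  set (E := exp (Series (fun n => jdev a b (S n)))).
  set (psi := fun n => jdev a b (S n) * ((1 + t + t^2) * (1 + E * / (1 - t^2)) / m)).
  assert (Ht2 : 0 < 1 - t^2) by nra.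
  assert (Hth : forall n, 0 <= th a b t m n <= psi n).
  { intros n. split. apply th_ge0; auto; lra.
    unfold th, psi. unfold Rdiv. 
    replace (jdev a b (S n) * (1 + t + t ^ 2) * (1 + Lseq a t n) * / m) with (jdev a b (S n) * ((1 + t + t ^ 2) * (1 + Lseq a t n) * / m)) by ring.
    apply Rmult_le_compat_l. apply jdev_ge0. apply Rmult_le_compat_r. left; apply Rinv_0_lt_compat; lra.
    apply Rmult_le_compat_l. nra.
    apply Rplus_le_compat_l. eapply Rle_trans. apply (Lseq_bound a b t m Hm Ham).
    apply Rmult_le_compat.
    - apply Rle_trans with 1; [lra|]. apply Yp_ge1. intros; apply jdev_ge0.
    - apply Rle_trans with 1; [lra|]. apply Sg_ge1.
    - eapply Rle_trans. apply Yp_exp. intros; apply jdev_ge0. apply exp_mono.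
      apply psum_le_Series; auto. intros; apply jdev_ge0.
    - apply Sg_lt1; lra. }
  assert (Hpsi : ex_series psi) by (apply ex_series_scal_r; auto).
  set (e := fun n => psi n * exp (Series psi)).
  assert (He : ex_series e) by (apply ex_series_scal_r; auto).
  assert (He0 : forall n, 0 <= e n).
  { intros n. unfold e. pose proof (Hth n). pose proof (exp_pos (Series psi)). nra. }
  assert (Hd : forall n D, Nrm rho (dgc a b z0 n) D <= e n).
  { intros n D. eapply Rle_trans. apply (coef_core a b ha z0 rho m Hrho Hm Ham D n). fold t.
    destruct (Hth n) as [H1 H2]. apply Rmult_le_compat; auto.
    apply Rle_trans with 1; [lra|]. apply Yp_ge1. intros; apply th_ge0; auto; lra.
    eapply Rle_trans. apply Yp_exp. intros; apply th_ge0; auto; lra. apply exp_mono.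
    eapply Rle_trans. apply psum_le. intros k; apply (Hth k).
    apply psum_le_Series; auto. intros k. pose proof (Hth k). lra. }
  set (gam := fun k => ulim (fun n (_ : C) => gc a b z0 n k) (RtoC 0)).
  assert (Hgam : forall k eps, 0 < eps -> exists N, forall n, (N <= n)%nat -> Cmod (gc a b z0 n k - gam k)%C < eps).
  { intros k eps Heps.
    destruct (unif_lim (fun n (_ : C) => gc a b z0 n k) (fun _ => True) (fun n => e n * / rho ^ k)) as [U _].
    - apply ex_series_scal_r. auto.
    - intros n _ _. apply (Rmult_le_reg_r (rho ^ k)). apply pow_lt; auto.
      rewrite Rmult_assoc, Rinv_l, Rmult_1_r by (apply Rgt_not_eq, pow_lt; auto).
      eapply Rle_trans; [|apply (Hd n (S k))]. apply (Nrm_term rho Hrho (dgc a b z0 n) (S k) k). lia.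
    - destruct (U eps Heps) as [N HN]. exists N. intros n Hn. apply (HN n (RtoC 0)); auto. }
  assert (Htel : forall n j D, Nrm rho (fun k => gc a b z0 (n + j)%nat k - gc a b z0 n k)%C D <= psum e (n + j) - psum e n).
  { intros n j D. induction j.
    - rewrite Nat.add_0_r. rewrite (Nrm_ext rho _ (fun k => RtoC 0 * RtoC 0)%C) by (intros; ring).
      rewrite Nrm_scal, Cmod_0. lra.
    - replace (n + S j)%nat with (S (n + j)) by lia. simpl psum.
      rewrite (Nrm_ext rho _ (fun k => dgc a b z0 (n + j) k + (gc a b z0 (n + j)%nat k - gc a b z0 n k))%C) by (intros; unfold dgc; ring).
      eapply Rle_trans. apply (Nrm_add rho Hrho). pose proof (Hd (n + j)%nat D). lra. }
  assert (Hsmall : forall K eta, 0 < eta -> exists N, forall m', (N <= m')%nat -> Nrm rho (fun k => gam k - gc a b z0 m' k)%C K <= eta).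
  { induction K; intros eta Heta.
    - exists 0%nat. intros. unfold Nrm. simpl. lra.
    - destruct (IHK (eta/2) ltac:(lra)) as [N1 HN1].
      destruct (Hgam K (eta / 2 / (rho ^ K)) ltac:(apply Rdiv_lt_0_compat; [lra| apply pow_lt; auto])) as [N2 HN2].
      exists (N1 + N2)%nat. intros m' Hm'. unfold Nrm. simpl. fold (Nrm rho (fun k => gam k - gc a b z0 m' k)%C K).
      specialize (HN1 m' ltac:(lia)). specialize (HN2 m' ltac:(lia)).
      replace (gam K - gc a b z0 m' K)%C with (- (gc a b z0 m' K - gam K))%C by ring. rewrite Cmod_opp.
      assert (Cmod (gc a b z0 m' K - gam K)%C * rho ^ K <= eta / 2 / rho ^ K * rho ^ K).
      { apply Rmult_le_compat_r. left; apply pow_lt; auto. lra. }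
      assert (eta / 2 / rho ^ K * rho ^ K = eta / 2) by (field; apply Rgt_not_eq, pow_lt; auto). lra. }
  set (T := fun n => Series e - psum e n).
  assert (HT : forall n K, Nrm rho (fun k => gam k - gc a b z0 n k)%C K <= T n).
  { intros n K. apply le_epsilon. intros eta Heta.
    destruct (Hsmall K eta Heta) as [N HN]. specialize (HN (n + N)%nat ltac:(lia)).
    rewrite (Nrm_ext rho _ (fun k => (gam k - gc a b z0 (n + N)%nat k) + (gc a b z0 (n + N)%nat k - gc a b z0 n k))%C) by (intros; ring).
    eapply Rle_trans. apply (Nrm_add rho Hrho). pose proof (Htel n N K).
    pose proof (psum_le_Series e (n + N) He0 He). unfold T. lra. }
  exists rho, gam. split; auto.
  intros z Hzz0.
  set (w := (z - z0)%C).
  assert (Hzw : z = (z0 + w)%C) by (unfold w; ring).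
  assert (Hz1 : Cmod z < 1).
  { rewrite Hzw. eapply Rle_lt_trans; [apply Cmod_triangle|]. unfold rho in Hzz0. fold w in Hzz0. lra. }
  assert (Hpm : closed_disk_pm1 z).
  { split. lra. split; intro H; rewrite H in Hz1; [rewrite Cmod_1 in Hz1| rewrite Cmod_R, Rabs_m1 in Hz1]; lra. }
  pose proof (pm1_pos z Hpm) as Hdl.
  destruct (conv_dl a b ha hs (Cmod (1 - z * z)%C) Hdl) as [_ Hcv].
  specialize (Hcv z (conj (Rlt_le _ _ Hz1) (Rle_refl _))).
  unfold is_pseries, is_series. apply filterlim_locally. intros eps.
  pose proof (cond_pos eps) as Heps.
  destruct (Hcv (eps / 3) ltac:(lra)) as [N1 HN1].
  pose proof (psum_cauchy e He) as _.
  assert (HTl : exists N2, forall n, (N2 <= n)%nat -> T n < eps / 3).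
  { pose proof (psum_lim e He) as HL. apply is_lim_seq_spec in HL. destruct (HL (mkposreal (eps/3) ltac:(lra))) as [N2 HN2].
    exists N2. intros n Hn. specialize (HN2 n Hn). simpl in HN2. apply Rabs_lt_between in HN2. unfold T. lra. }
  destruct HTl as [N2 HN2].
  set (n := (N1 + N2)%nat).
  exists (2 * n + 1)%nat. intros K HK.
  apply Cmod_ball.
  rewrite sum_n_Csum.
  assert (EV : Ev (gc a b z0 n) (S K) w = gn a b n z).
  { rewrite Hzw. apply (coef_eval a b ha z0 w n). lia. }
  change (Csum (fun k => scal (pow_n w k) (gam k)) (S K)) with (Csum (fun k => pow_n w k * gam k)%C (S K)).
  replace (Csum (fun k => pow_n w k * gam k)%C (S K) - u a b z)%C with
    (Csum (fun k => (gam k - gc a b z0 n k) * pow_n w k)%C (S K) + (Ev (gc a b z0 n) (S K) w - u a b z))%C.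
  2:{ unfold Ev. rewrite (Csum_split (pow_n w) gam (gc a b z0 n)). ring. }
  rewrite EV. eapply Rle_lt_trans; [apply Cmod_triangle|].
  assert (Cmod (Csum (fun k => (gam k - gc a b z0 n k) * pow_n w k)%C (S K)) <= T n).
  { eapply Rle_trans. apply (Csum_bound rho); auto. unfold w. lra. apply HT. }
  specialize (HN1 n ltac:(unfold n; lia)). specialize (HN2 n ltac:(unfold n; lia)). lra.
Qed.
End Analytic.

Theorem theoremA3 (a b : nat -> R) (ha : forall n, (1 <= n)%nat -> 0 < a n) :
  (* (i) *)
  (ex_series (fun n => jdev a b (S n)) ->
     exists u : C -> C,
       (forall z, closed_disk_pm1 z -> cv_C (fun n => gn a b n z) (u z)) /\
       unif_cv_compacts (gn a b) u closed_disk_pm1 /\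
       analytic_on u open_disk /\
       continuous_on_C u closed_disk_pm1 /\
       (forall z, open_disk z -> cv_C (fun n => cn a b n z) (u z / (1 - z * z))%C))
  /\
  (* (ii) *)
  (ex_series (fun n => INR (S n) * jdev a b (S n)) ->
     exists u : C -> C,
       (forall z, closed_disk z -> cv_C (fun n => gn a b n z) (u z)) /\
       unif_cv_on (gn a b) u closed_disk /\
       continuous_on_C u closed_disk)
  /\
  (* (iii) *)
  (forall C0 R0 : R, 1 < R0 ->
     (forall n, (1 <= n)%nat -> jdev a b n <= C0 * / R0 ^ (2 * n)) ->
     exists u : C -> C,
       (forall z, disk_R R0 z -> cv_C (fun n => gn a b n z) (u z)) /\
       unif_cv_compacts (gn a b) u (disk_R R0)).
Proof.
  split; [|split].
  - intros hs. exists (u a b). split; [|split; [|split; [|split]]].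
    + intros z Hz. pose proof (pm1_pos z Hz) as Hdl.
      apply (proj2 (conv_dl a b ha hs _ Hdl)). split. apply Hz. lra.
    + intros K HK Hsub. destruct (compact_pm1 K HK Hsub) as [dl [Hdl HKd]].
      apply (unif_restrict _ _ _ (Sdl dl)). apply (proj1 (conv_dl a b ha hs _ Hdl)).
      intros z Hz. split. apply (Hsub z Hz). apply HKd; auto.
    + apply analytic; auto.
    + intros z Hz. pose proof (pm1_pos z Hz) as Hdl.
      set (dl := Cmod (1 - z * z)%C / 2).
      apply (cont_transfer (gn a b) (u a b) closed_disk_pm1 (Sdl dl) z).
      * apply (proj1 (conv_dl a b ha hs dl ltac:(unfold dl; lra))).
      * intros n. apply cont_gn; auto.
      * split. apply Hz. unfold dl. lra.
      * destruct (cont_1zz z dl ltac:(unfold dl; lra)) as [d [Hd H]].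
        exists d. split; auto. intros w Hw Hwz. split. apply Hw.
        specialize (H w Hwz). pose proof (Cmod_rev (1 - w * w)%C (1 - z * z)%C).
        assert (Rabs (Cmod (1 - w * w)%C - Cmod (1 - z * z)%C) < dl) by lra.
        apply Rabs_lt_between in H1. unfold dl in *. lra.
    + apply part_i_cn; auto.
  - intros Hs. exists (u a b). apply part_ii; auto.
  - intros C0 R0 HR HJ. exists (u a b). apply (part_iii a b ha C0 R0 HR HJ).
Qed.
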